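(* Let $Z>0$, $R>0$, and $k>0$ with $k\neq m\pi/Z$ for every integer $m\ge1$. For $m\ge1$ set $k_m=\sqrt{k^2-m^2\pi^2/Z^2}$ if $k>m\pi/Z$ and $k_m=\mathrm{i}\sqrt{m^2\pi^2/Z^2-k^2}$ otherwise, and let $h(t)=tH_1^{(1)\prime}(t)/H_1^{(1)}(t)$ with $H_1^{(1)}$ the Hankel function of the first kind of order one. Let $\Gamma_R=\{(R,z):0<z<Z\}$, let $H^{1/2}_0(\Gamma_R)$ be the space of $v=\sum_{m\ge1}v_m\sin(m\pi z/Z)$ with norm $\|v\|_{H^{1/2}(\Gamma_R)}^2=\sum_{m\ge1}m|v_m|^2<\infty$, and let $H^{-1/2}(\Gamma_R)$ be its dual (pairing $\langle\xi,v\rangle_{\Gamma_R}=\int_0^Z\xi\bar v\,\mathrm{d}z$), normed equivalently by $\|\xi\|_{H^{-1/2}(\Gamma_R)}^2=\sum_{m\ge1}m^{-1}|\xi_m|^2$ for $\xi=\sum\xi_m\sin(m\pi z/Z)$. Define $T:H^{1/2}_0(\Gamma_R)\to H^{-1/2}(\Gamma_R)$ by $T\eta=\sum_{m\ge1}h(k_mR)\eta_m\sin(m\pi z/Z)$. Then there exists a constant $C>0$ depending only on $k$, $R$ and $Z$ such that $\|Tv\|_{H^{-1/2}(\Gamma_R)}\le C\|v\|_{H^{1/2}(\Gamma_R)}$ for all $v\in H^{1/2}_0(\Gamma_R)$. *)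

(* Defs.v *)
From Stdlib Require Import Reals Factorial.
From Coquelicot Require Export Coquelicot.
Open Scope R_scope.

Definition CSeries (a : nat -> C) : C :=
  (Series (fun n => Re (a n)), Series (fun n => Im (a n))).

(* Principal argument in (-PI, PI]  (value 0 at z = 0, irrelevant). *)
Definition Carg (z : C) : R :=
  if Rlt_dec 0 (Re z) then atan (Im z / Re z)
  else if Rlt_dec (Re z) 0 then
         (if Rle_dec 0 (Im z) then atan (Im z / Re z) + PI
          else atan (Im z / Re z) - PI)
  else if Rlt_dec 0 (Im z) then PI / 2
  else if Rlt_dec (Im z) 0 then - (PI / 2) else 0.

Definition Clog (z : C) : C := (ln (Cmod z), Carg z).

Definition harmonic (n : nat) : R :=
  match n with O => 0 | S p => sum_f_R0 (fun j => / INR (S j)) p end.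
Definition euler_gamma : R := real (Lim_seq (fun n => harmonic (S n) - ln (INR (S n)))).

(* Digamma at positive integers: psi(n+1) = -gamma + H_n. *)
Definition digamma_nat (n : nat) : R := - euler_gamma + harmonic n.

Definition bessel1_term (z : C) (k : nat) : C :=
  Cmult (RtoC ((-1) ^ k / (INR (fact k) * INR (fact (S k)))))
        (Cpow (Cdiv z 2) (2 * k + 1)).

Definition besselJ1 (z : C) : C := CSeries (bessel1_term z).

(* Bessel function of the second kind, order one (DLMF 10.8.1, n = 1),
   principal branch. *)
Definition besselY1 (z : C) : C :=
  Cplus (Cplus (Copp (Cdiv (RtoC 2) (Cmult (RtoC PI) z)))
               (Cmult (Cmult (RtoC (2 / PI)) (Clog (Cdiv z 2))) (besselJ1 z)))
        (Copp (Cmult (RtoC (/ PI))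
           (CSeries (fun k => Cmult (RtoC (digamma_nat k + digamma_nat (S k)))
                                    (bessel1_term z k))))).

Definition hankel1 (z : C) : C := Cplus (besselJ1 z) (Cmult Ci (besselY1 z)).

Definition hfun (t : C) : C := Cdiv (Cmult t (C_derive hankel1 t)) (hankel1 t).

Definition kmode (k Z : R) (m : nat) : C :=
  if Rlt_dec (INR m * PI / Z) k
  then RtoC (sqrt (k ^ 2 - (INR m) ^ 2 * PI ^ 2 / Z ^ 2))
  else Cmult Ci (RtoC (sqrt ((INR m) ^ 2 * PI ^ 2 / Z ^ 2 - k ^ 2))).

(* A function v = sum_{m>=1} v_m sin(m pi z / Z) on Gamma_R is represented by
   its coefficient sequence m |-> v m (the value v 0 is unused). *)
Definition H12_terms (v : nat -> C) : nat -> R :=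
  fun n => INR (S n) * (Cmod (v (S n))) ^ 2.
Definition Hm12_terms (xi : nat -> C) : nat -> R :=
  fun n => (Cmod (xi (S n))) ^ 2 / INR (S n).

Definition in_H12 (v : nat -> C) : Prop := ex_series (H12_terms v).
Definition in_Hm12 (xi : nat -> C) : Prop := ex_series (Hm12_terms xi).

Definition H12_norm (v : nat -> C) : R := sqrt (Series (H12_terms v)).
Definition Hm12_norm (xi : nat -> C) : R := sqrt (Series (Hm12_terms xi)).

Definition Top (k Rad Z : R) (v : nat -> C) : nat -> C :=
  fun m => Cmult (hfun (Cmult (kmode k Z m) (RtoC Rad))) (v m).

(* Main.v *)
Require Import Defs.
From Stdlib Require Import Reals Lra Lia Psatz Field Ring Ranalysis5 Factorial Classical.
From Coquelicot Require Import Coquelicot.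
Open Scope R_scope.
Lemma Cmod_le_ReIm (z : C) : Cmod z <= Rabs (Re z) + Rabs (Im z).
Proof.
  destruct z as [x y]; unfold Cmod, Re, Im; simpl.
  apply Rsqr_incr_0_var.
  - rewrite Rsqr_sqrt by nra. unfold Rsqr.
    pose proof (Rabs_pos x); pose proof (Rabs_pos y).
    assert (x * (x * 1) = Rabs x * Rabs x).
    { rewrite <- Rabs_mult. rewrite Rmult_1_r. rewrite Rabs_right; nra. }
    assert (y * (y * 1) = Rabs y * Rabs y).
    { rewrite <- Rabs_mult. rewrite Rmult_1_r. rewrite Rabs_right; nra. }
    nra.
  - pose proof (Rabs_pos x); pose proof (Rabs_pos y); lra.
Qed.

Lemma Re_le_Cmod (z : C) : Rabs (Re z) <= Cmod z.
Proof. apply re_le_Cmod. Qed.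

Lemma Im_le_Cmod (z : C) : Rabs (Im z) <= Cmod z.
Proof.
  destruct z as [x y]. pose proof (Rmax_Cmod (x, y)). simpl in *.
  unfold Im; simpl. pose proof (Rmax_r (Rabs x) (Rabs y)). lra.
Qed.

Definition Cex (u : nat -> C) := ex_series (fun k => Re (u k)) /\ ex_series (fun k => Im (u k)).

Lemma exR_plus (a b : nat -> R) : ex_series a -> ex_series b -> ex_series (fun n => a n + b n).
Proof. intros Ha Hb. exact (ex_series_plus a b Ha Hb). Qed.
Lemma exR_minus (a b : nat -> R) : ex_series a -> ex_series b -> ex_series (fun n => a n - b n).
Proof. intros Ha Hb. exact (ex_series_minus a b Ha Hb). Qed.
Lemma exR_scal (c : R) (a : nat -> R) : ex_series a -> ex_series (fun n => c * a n).
Proof. intros Ha. exact (ex_series_scal_l c a Ha). Qed.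

Lemma Cex_bound (u : nat -> C) (B : nat -> R) :
  (forall k, Cmod (u k) <= B k) -> ex_series B -> Cex u.
Proof.
  intros H HB; split; apply (ex_series_le (K:=R_AbsRing) (V:=R_CompleteNormedModule)) with B; auto;
  intros n; change (norm (Re (u n))) with (Rabs (Re (u n))) || change (norm (Im (u n))) with (Rabs (Im (u n))).
  - eapply Rle_trans; [apply Re_le_Cmod|apply H].
  - eapply Rle_trans; [apply Im_le_Cmod|apply H].
Qed.

Lemma Series_abs_bound (a B : nat -> R) :
  (forall k, Rabs (a k) <= B k) -> ex_series B -> Rabs (Series a) <= Series B.
Proof.
  intros H HB.
  assert (ex_series (fun n => Rabs (a n))).
  { apply (ex_series_le (K:=R_AbsRing) (V:=R_CompleteNormedModule)) with B; auto.
    intros n. change (norm (Rabs (a n))) with (Rabs (Rabs (a n))). rewrite Rabs_Rabsolu. apply H. }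
  eapply Rle_trans. apply Series_Rabs; auto.
  apply Series_le; auto. intros n; split; [apply Rabs_pos|apply H].
Qed.

Lemma CSeries_bound (u : nat -> C) (B : nat -> R) :
  (forall k, Cmod (u k) <= B k) -> ex_series B -> Cmod (CSeries u) <= 2 * Series B.
Proof.
  intros H HB. eapply Rle_trans. apply Cmod_le_ReIm. unfold CSeries, Re, Im; simpl.
  assert (Rabs (Series (fun n => fst (u n))) <= Series B).
  { apply Series_abs_bound; auto. intros k; eapply Rle_trans; [apply (Re_le_Cmod (u k))|apply H]. }
  assert (Rabs (Series (fun n => snd (u n))) <= Series B).
  { apply Series_abs_bound; auto. intros k; eapply Rle_trans; [apply (Im_le_Cmod (u k))|apply H]. }
  lra.
Qed.

Lemma CSeries_ext (u v : nat -> C) : (forall k, u k = v k) -> CSeries u = CSeries v.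
Proof.
  intros H. unfold CSeries. f_equal; apply Series_ext; intros n; rewrite H; auto.
Qed.

Lemma CSeries_plus (u v : nat -> C) : Cex u -> Cex v ->
  CSeries (fun k => Cplus (u k) (v k)) = Cplus (CSeries u) (CSeries v).
Proof.
  intros [H1 H2] [H3 H4]. unfold CSeries, Cplus; simpl. f_equal.
  - rewrite <- Series_plus; auto.
  - rewrite <- Series_plus; auto.
Qed.

Lemma CSeries_scal (c : C) (u : nat -> C) : Cex u ->
  CSeries (fun k => Cmult c (u k)) = Cmult c (CSeries u).
Proof.
  intros [H1 H2]. destruct c as [a b]. unfold CSeries, Cmult; simpl. f_equal.
  - rewrite Series_minus; [rewrite !Series_scal_l; auto| apply exR_scal, H1 | apply exR_scal, H2].
  - rewrite Series_plus; [rewrite !Series_scal_l; auto| apply exR_scal, H2 | apply exR_scal, H1].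
Qed.

Lemma Cex_plus u v : Cex u -> Cex v -> Cex (fun k => Cplus (u k) (v k)).
Proof.
  intros [H1 H2] [H3 H4]; split; simpl; apply exR_plus; auto.
Qed.

Lemma Cex_scal c u : Cex u -> Cex (fun k => Cmult c (u k)).
Proof.
  intros [H1 H2]; destruct c as [a b]; split; simpl.
  - apply exR_minus; apply exR_scal; auto.
  - apply exR_plus; apply exR_scal; auto.
Qed.

Lemma Cex_ext u v : (forall k, u k = v k) -> Cex u -> Cex v.
Proof.
  intros H [H1 H2]; split.
  - eapply ex_series_ext; [|apply H1]. intros; simpl; rewrite H; auto.
  - eapply ex_series_ext; [|apply H2]. intros; simpl; rewrite H; auto.
Qed.

Lemma CSeries_shift (u : nat -> C) : u 0%nat = RtoC 0 ->
  CSeries u = CSeries (fun k => u (S k)).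
Proof.
  intros H. unfold CSeries. f_equal; apply Series_incr_1_aux; rewrite H; auto.
Qed.

Lemma Series_0' : Series (fun _ => 0) = 0.
Proof.
  rewrite (Series_ext _ (fun n => 0 * 0)) by (intros; ring).
  rewrite Series_scal_l. ring.
Qed.

Lemma CSeries_zero (u : nat -> C) : (forall k, u k = RtoC 0) -> CSeries u = RtoC 0.
Proof.
  intros H. unfold CSeries. rewrite (Series_ext _ (fun _ => 0)), (Series_ext (fun n => Im (u n)) (fun _ => 0)).
  - rewrite Series_0'. auto.
  - intros; rewrite H; auto.
  - intros; rewrite H; auto.
Qed.
Lemma RtoC_INR_S (n : nat) : RtoC (INR (S n)) = Cplus (RtoC (INR n)) (RtoC 1).
Proof. rewrite S_INR. rewrite RtoC_plus. auto. Qed.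

Lemma pow_err_id (w0 h : C) (p : nat) :
  (Cpow (w0 + h) (S p) - Cpow w0 (S p) - RtoC (INR (S p)) * Cpow w0 (pred (S p)) * h)%C =
  ((w0 + h) * (Cpow (w0 + h) p - Cpow w0 p - RtoC (INR p) * Cpow w0 (pred p) * h)
   + RtoC (INR p) * h * h * Cpow w0 (pred p))%C.
Proof.
  destruct p as [|q].
  - simpl. ring.
  - rewrite !RtoC_INR_S. simpl pred. rewrite !Cpow_S. ring.
Qed.

Lemma Cmod_INR (n : nat) : Cmod (RtoC (INR n)) = INR n.
Proof. rewrite Cmod_R. apply Rabs_pos_eq, pos_INR. Qed.

Lemma pow_err (w0 h : C) (p : nat) : Cmod h <= 1 ->
  Cmod (Cpow (w0 + h) p - Cpow w0 p - RtoC (INR p) * Cpow w0 (pred p) * h)%C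
  <= INR p ^ 2 * (Cmod w0 + 1) ^ p * Cmod h ^ 2.
Proof.
  intros Hh. set (M := Cmod w0 + 1).
  assert (HM : 1 <= M) by (unfold M; pose proof (Cmod_ge_0 w0); lra).
  assert (Hwh : Cmod (w0 + h) <= M).
  { unfold M. eapply Rle_trans; [apply Cmod_triangle|lra]. }
  induction p as [|p IH].
  - assert (E0 : (Cpow (w0 + h) 0 - Cpow w0 0 - RtoC (INR 0) * Cpow w0 (pred 0) * h)%C = RtoC 0) by (simpl; ring).
    rewrite E0, Cmod_R, Rabs_R0. pose proof (Cmod_ge_0 h). simpl. nra.
  - rewrite pow_err_id.
    eapply Rle_trans; [apply Cmod_triangle|].
    rewrite !Cmod_mult, Cmod_INR, Cmod_pow.
    set (E := Cmod (Cpow (w0 + h) p - Cpow w0 p - RtoC (INR p) * Cpow w0 (pred p) * h)%C) in *.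
    assert (HE : 0 <= E) by apply Cmod_ge_0.
    assert (Hp1 : Cmod w0 ^ pred p <= M ^ (S p)).
    { apply Rle_trans with (M ^ pred p). apply pow_incr. split. apply Cmod_ge_0. unfold M; lra.
      apply Rle_pow; [auto|]. destruct p; simpl; lia. }
    pose proof (Cmod_ge_0 h). pose proof (pos_INR p).
    assert (HMp : 0 <= M ^ p) by (apply pow_le; lra).
    assert (Cmod (w0 + h) * E <= M * (INR p ^ 2 * M ^ p * Cmod h ^ 2)).
    { apply Rmult_le_compat; auto. apply Cmod_ge_0. }
    assert (INR p * Cmod h * Cmod h * Cmod w0 ^ pred p <= INR p * Cmod h ^ 2 * M ^ S p).
    { replace (INR p * Cmod h * Cmod h * Cmod w0 ^ pred p) with ((INR p * Cmod h ^ 2) * Cmod w0 ^ pred p) by ring.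
      apply Rmult_le_compat_l; auto. apply Rmult_le_pos; auto. apply pow_le; auto. }
    rewrite S_INR. simpl pow. simpl pow in H1, H2.
    assert (0 <= INR p * Cmod h * Cmod h * M * M ^ p) by (repeat apply Rmult_le_pos; auto; lra).
    assert (0 <= M * M ^ p * Cmod h * Cmod h) by (repeat apply Rmult_le_pos; auto; lra).
    nra.
Qed.
Definition Gs (b : nat -> R) (e : nat -> nat) (w : C) : C :=
  CSeries (fun k => Cmult (RtoC (b k)) (Cpow w (e k))).
Definition good (b : nat -> R) := forall M, 0 < M -> ex_series (fun k => Rabs (b k) * M ^ k).

Lemma pow_2k1 (M : R) (k : nat) : M ^ (2 * k + 1) = M * (M ^ 2) ^ k.
Proof. rewrite pow_add, <- pow_mult. simpl; ring. Qed.

Lemma INR_2k1_le (k : nat) : INR (2 * k + 1) <= 3 ^ k.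
Proof.
  induction k.
  - simpl; lra.
  - replace (2 * S k + 1)%nat with (S (S (2 * k + 1))) by lia.
    rewrite !S_INR. change (3 ^ S k) with (3 * 3 ^ k). pose proof (pow_R1_Rle 3 k ltac:(lra)). lra.
Qed.

Lemma ex_series_le_R (a B : nat -> R) : (forall k, Rabs (a k) <= B k) -> ex_series B -> ex_series a.
Proof.
  intros H HB. apply (ex_series_le (K:=R_AbsRing) (V:=R_CompleteNormedModule)) with B; auto.
Qed.

Lemma good_le (b b' : nat -> R) (K : R) :
  (forall k, Rabs (b k) <= K * 3 ^ k * Rabs (b' k)) -> good b' -> good b.
Proof.
  intros H Hg M HM. apply ex_series_le_R with (fun k => K * (Rabs (b' k) * (3 * M) ^ k)).
  - intros k. rewrite Rabs_mult, Rabs_Rabsolu, (Rabs_pos_eq (M ^ k)) by (apply pow_le; lra).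
    rewrite Rpow_mult_distr. specialize (H k).
    assert (0 <= M ^ k) by (apply pow_le; lra).
    replace (K * (Rabs (b' k) * (3 ^ k * M ^ k))) with ((K * 3 ^ k * Rabs (b' k)) * M ^ k) by ring.
    apply Rmult_le_compat_r; auto.
  - apply exR_scal. apply Hg. lra.
Qed.

Lemma good_ext (b b' : nat -> R) : (forall k, b k = b' k) -> good b' -> good b.
Proof.
  intros H Hg. apply good_le with b' 1; [|exact Hg]. intros k; rewrite H.
  pose proof (pow_R1_Rle 3 k ltac:(lra)). pose proof (Rabs_pos (b' k)). nra.
Qed.

Lemma good_mulINR (b : nat -> R) (e : nat -> nat) :
  (forall k, (e k <= 2 * k + 1)%nat) -> good b -> good (fun k => b k * INR (e k)).
Proof.
  intros He Hg. apply good_le with b 1; [|exact Hg]. intros k.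
  rewrite Rabs_mult, (Rabs_pos_eq (INR (e k))) by apply pos_INR.
  assert (INR (e k) <= 3 ^ k).
  { eapply Rle_trans; [apply le_INR, He|apply INR_2k1_le]. }
  pose proof (Rabs_pos (b k)). nra.
Qed.

Lemma good_plus (b b' : nat -> R) : good b -> good b' -> good (fun k => b k + b' k).
Proof.
  intros H1 H2 M HM. apply ex_series_le_R with (fun k => Rabs (b k) * M ^ k + Rabs (b' k) * M ^ k).
  - intros k. assert (0 <= M ^ k) by (apply pow_le; lra).
    rewrite Rabs_mult, Rabs_Rabsolu, (Rabs_pos_eq (M ^ k)) by auto.
    rewrite <- Rmult_plus_distr_r. apply Rmult_le_compat_r; auto. apply Rabs_triang.
  - apply exR_plus; auto.
Qed.

Lemma good_scal (c : R) (b : nat -> R) : good b -> good (fun k => c * b k).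
Proof.
  intros H. apply good_le with b (Rabs c); [|exact H]. intros k. rewrite Rabs_mult.
  pose proof (pow_R1_Rle 3 k ltac:(lra)). assert (0 <= Rabs c * Rabs (b k)) by (apply Rmult_le_pos; apply Rabs_pos). nra.
Qed.

Lemma good_shift (b : nat -> R) : good b -> good (fun k => b (S k)).
Proof.
  intros H M HM. specialize (H M HM). apply ex_series_incr_1 in H.
  apply ex_series_ext with (fun k => / M * (Rabs (b (S k)) * M ^ (S k))).
  - intros k. simpl. field. lra.
  - apply exR_scal. exact H.
Qed.

Definition shiftR (b : nat -> R) (k : nat) : R := match k with O => 0 | S j => b j end.

Lemma good_shiftR (b : nat -> R) : good b -> good (shiftR b).
Proof.
  intros H M HM. apply ex_series_incr_1.
  apply ex_series_ext with (fun k => M * (Rabs (b k) * M ^ k)).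
  - intros k. simpl. ring.
  - apply exR_scal. apply H; auto.
Qed.

Lemma good_Cex (b : nat -> R) (e : nat -> nat) (w : C) :
  good b -> (forall k, (e k <= 2 * k + 1)%nat) ->
  Cex (fun k => Cmult (RtoC (b k)) (Cpow w (e k))).
Proof.
  intros Hg He. set (M := Cmod w + 1).
  assert (HM : 1 <= M) by (unfold M; pose proof (Cmod_ge_0 w); lra).
  apply Cex_bound with (fun k => M * (Rabs (b k) * (M ^ 2) ^ k)).
  - intros k. rewrite Cmod_mult, Cmod_R, Cmod_pow.
    assert (Cmod w ^ e k <= M ^ (2 * k + 1)).
    { apply Rle_trans with (M ^ e k). apply pow_incr; split; [apply Cmod_ge_0|unfold M; lra].
      apply Rle_pow; auto. }
    rewrite pow_2k1 in H. pose proof (Rabs_pos (b k)).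
    replace (M * (Rabs (b k) * (M ^ 2) ^ k)) with (Rabs (b k) * (M * (M ^ 2) ^ k)) by ring.
    apply Rmult_le_compat_l; auto.
  - apply exR_scal. apply Hg. apply pow_lt; lra.
Qed.

Lemma Gs_err (b : nat -> R) (e e' : nat -> nat) (w0 : C) :
  good b -> (forall k, (e k <= 2 * k + 1)%nat) -> (forall k, e k = S (e' k) \/ (e k = O /\ e' k = O)) ->
  exists K, 0 <= K /\ forall h, Cmod h <= 1 ->
    Cmod (Gs b e (w0 + h) - Gs b e w0 - h * Gs (fun k => Rmult (b k) (INR (e k))) e' w0)%C <= K * Cmod h ^ 2.
Proof.
  intros Hg He He'. set (M := Cmod w0 + 1).
  assert (HM : 1 <= M) by (unfold M; pose proof (Cmod_ge_0 w0); lra).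
  set (B := fun k => Rabs (b k) * INR (e k) ^ 2 * M ^ (e k)).
  assert (HB : ex_series B).
  { apply ex_series_le_R with (fun k => M * (Rabs (b k) * (9 * M ^ 2) ^ k)).
    - intros k. unfold B. rewrite Rabs_pos_eq.
      2: { apply Rmult_le_pos. apply Rmult_le_pos. apply Rabs_pos. apply pow_le, pos_INR. apply pow_le; lra. }
      assert (H1 : M ^ e k <= M * (M ^ 2) ^ k) by (rewrite <- pow_2k1; apply Rle_pow; auto).
      assert (H2 : INR (e k) ^ 2 <= 9 ^ k).
      { replace 9 with (3 ^ 2) by ring. rewrite <- pow_mult, Nat.mul_comm, pow_mult.
        apply pow_incr. split. apply pos_INR. eapply Rle_trans; [apply le_INR, He|apply INR_2k1_le]. }
      rewrite Rpow_mult_distr.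
      assert (0 <= INR (e k) ^ 2) by (apply pow_le, pos_INR).
      assert (0 <= M ^ e k) by (apply pow_le; lra).
      assert (0 <= (M ^ 2) ^ k) by (apply pow_le, pow_le; lra).
      pose proof (Rabs_pos (b k)).
      replace (M * (Rabs (b k) * (9 ^ k * (M ^ 2) ^ k))) with (Rabs (b k) * (9 ^ k * (M * (M ^ 2) ^ k))) by ring.
      rewrite Rmult_assoc. apply Rmult_le_compat_l; auto.
      apply Rmult_le_compat; auto.
    - apply exR_scal. apply Hg. assert (0 < M ^ 2) by (apply pow_lt; lra). lra. }
  exists (2 * Series B). split.
  { assert (0 <= Series B). { apply Series_le with (a := fun _ => 0) in HB.
      - rewrite Series_0' in HB. auto.
      - intros; split; [lra|]. unfold B. apply Rmult_le_pos. apply Rmult_le_pos. apply Rabs_pos. apply pow_le, pos_INR. apply pow_le; lra. }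
    lra. }
  intros h Hh.
  assert (Hb' : good (fun k => b k * INR (e k))) by (apply good_mulINR; auto).
  assert (He'2 : forall k, (e' k <= 2 * k + 1)%nat).
  { intros k; destruct (He' k) as [E|[E E2]]; specialize (He k); lia. }
  set (u1 := fun k => (RtoC (b k) * Cpow (w0 + h) (e k))%C).
  set (u2 := fun k => (RtoC (b k) * Cpow w0 (e k))%C).
  set (u3 := fun k => (RtoC (Rmult (b k) (INR (e k))) * Cpow w0 (e' k))%C).
  assert (C1 : Cex u1) by (apply good_Cex; auto).
  assert (C2 : Cex u2) by (apply good_Cex; auto).
  assert (C3 : Cex u3) by (apply good_Cex; auto).
  assert (Eq : (Gs b e (w0 + h) - Gs b e w0 - h * Gs (fun k => Rmult (b k) (INR (e k))) e' w0)%C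
     = CSeries (fun k => (u1 k + (- (1)) * u2 k) + (- h) * u3 k)%C).
  { rewrite CSeries_plus, CSeries_plus, CSeries_scal, CSeries_scal; auto.
    - unfold Gs; fold u1 u2 u3. ring.
    - apply Cex_scal; auto.
    - apply Cex_plus; auto; apply Cex_scal; auto.
    - apply Cex_scal; auto. }
  rewrite Eq.
  replace (2 * Series B * Cmod h ^ 2) with (2 * Series (fun k => B k * Cmod h ^ 2)).
  2: { rewrite (Series_ext _ (fun k => Cmod h ^ 2 * B k)) by (intros; ring). rewrite Series_scal_l. ring. }
  apply CSeries_bound.
  2: { apply ex_series_ext with (fun k => Cmod h ^ 2 * B k). intros n; apply Rmult_comm. apply exR_scal; auto. }
  intros k.
  unfold u1, u2, u3.
  replace (RtoC (b k) * Cpow (w0 + h) (e k) + - (1) * (RtoC (b k) * Cpow w0 (e k)) + - h * (RtoC (Rmult (b k) (INR (e k))) * Cpow w0 (e' k)))%C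
    with (RtoC (b k) * (Cpow (w0 + h) (e k) - Cpow w0 (e k) - RtoC (INR (e k)) * Cpow w0 (pred (e k)) * h))%C.
  2: { destruct (He' k) as [E|[E E2]].
         - rewrite E. simpl pred. rewrite RtoC_mult. ring.
         - rewrite E, E2. simpl. rewrite Rmult_0_r. ring. }
  rewrite Cmod_mult, Cmod_R. unfold B.
  pose proof (pow_err w0 h (e k) Hh). fold M in H.
  pose proof (Rabs_pos (b k)).
  replace (Rabs (b k) * INR (e k) ^ 2 * M ^ e k * Cmod h ^ 2) with (Rabs (b k) * (INR (e k) ^ 2 * M ^ e k * Cmod h ^ 2)) by ring.
  apply Rmult_le_compat_l; auto.
Qed.
Definition DD (S : R -> Prop) (F : C -> C) (z0 d L : C) : Prop :=
  forall eps, 0 < eps -> exists del, 0 < del /\ forall t, S t -> t <> 0 -> Rabs t < del ->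
    Cmod ((F (z0 + RtoC t * d) - F z0) / (RtoC t * d) - L)%C < eps.

Lemma Cmod_td (t : R) (d : C) : Cmod (RtoC t * d)%C = Rabs t * Cmod d.
Proof. rewrite Cmod_mult, Cmod_R. auto. Qed.

Lemma td_neq0 (t : R) (d : C) : t <> 0 -> d <> RtoC 0 -> (RtoC t * d)%C <> RtoC 0.
Proof.
  intros Ht Hd E. apply Cmod_gt_0 in Hd. assert (Cmod (RtoC t * d)%C = 0) by (rewrite E; apply Cmod_0).
  rewrite Cmod_td in H. apply Rmult_integral in H. destruct H as [H|H]; [|lra].
  apply Rabs_eq_0 in H. auto.
Qed.

Lemma DD_Leq S F z0 d L L' : L = L' -> DD S F z0 d L -> DD S F z0 d L'.
Proof. intros ->; auto. Qed.

Lemma DD_fext S F G z0 d L : (forall z, F z = G z) -> DD S F z0 d L -> DD S G z0 d L.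
Proof.
  intros E H eps He. destruct (H eps He) as [del [Hdel H1]]. exists del; split; auto.
  intros t St Ht Hlt. rewrite <- !E. auto.
Qed.

Lemma DD_of_bound S F z0 d L : d <> RtoC 0 ->
  (exists K r, 0 < r /\ 0 <= K /\ forall h, Cmod h <= r -> Cmod (F (z0 + h) - F z0 - h * L)%C <= K * Cmod h ^ 2) ->
  DD S F z0 d L.
Proof.
  intros Hd [K [r [Hr [HK Hb]]]] eps Heps.
  pose proof (proj1 (Cmod_gt_0 d) Hd) as Hdp.
  exists (Rmin (r / Cmod d) (eps / ((K + 1) * Cmod d))). split.
  { apply Rmin_pos; apply Rdiv_lt_0_compat; auto; nra. }
  intros t _ Ht Hlt.
  assert (Hlt1 : Rabs t < r / Cmod d) by (eapply Rlt_le_trans; [apply Hlt|apply Rmin_l]).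
  assert (Hlt2 : Rabs t < eps / ((K + 1) * Cmod d)) by (eapply Rlt_le_trans; [apply Hlt|apply Rmin_r]).
  set (h := (RtoC t * d)%C).
  assert (Hh0 : h <> RtoC 0) by (apply td_neq0; auto).
  assert (Hmh : Cmod h = Rabs t * Cmod d) by apply Cmod_td.
  assert (Hhp : 0 < Cmod h) by (apply Cmod_gt_0; auto).
  replace ((F (z0 + h) - F z0) / h - L)%C with ((F (z0 + h) - F z0 - h * L) / h)%C by (field; auto).
  rewrite Cmod_div by auto.
  assert (Cmod h <= r).
  { rewrite Hmh. apply Rlt_le. apply (Rmult_lt_compat_r (Cmod d)) in Hlt1; auto.
    unfold Rdiv in Hlt1. rewrite Rmult_assoc, Rinv_l, Rmult_1_r in Hlt1; lra. }
  specialize (Hb h H).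
  assert (Cmod h < eps / (K + 1)).
  { rewrite Hmh. apply (Rmult_lt_compat_r (Cmod d)) in Hlt2; auto.
    replace (eps / ((K + 1) * Cmod d) * Cmod d) with (eps / (K + 1)) in Hlt2 by (field; lra). lra. }
  apply Rle_lt_trans with (K * Cmod h).
  { apply Rmult_le_reg_r with (Cmod h); auto. unfold Rdiv. rewrite Rmult_assoc, Rinv_l by lra.
    simpl in Hb. nra. }
  assert (eps / (K + 1) * K < eps).
  { unfold Rdiv. apply Rmult_lt_reg_r with (K + 1). lra.
    rewrite !Rmult_assoc, (Rmult_comm K), <- (Rmult_assoc (/ (K+1))), Rinv_l by lra. nra. }
  assert (0 <= Cmod h) by lra. nra.
Qed.

Lemma DD_const S c z0 d : DD S (fun _ => c) z0 d (RtoC 0).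
Proof.
  intros eps Heps. exists 1. split; [lra|]. intros t _ _ _.
  replace ((c - c) / (RtoC t * d) - RtoC 0)%C with (RtoC 0).
  - rewrite Cmod_0. auto.
  - unfold Cdiv. ring.
Qed.

Lemma DD_id S z0 d : d <> RtoC 0 -> DD S (fun z => z) z0 d (RtoC 1).
Proof.
  intros Hd. apply DD_of_bound; auto. exists 0, 1. repeat split; try lra.
  intros h _. replace (z0 + h - z0 - h * RtoC 1)%C with (RtoC 0) by ring.
  rewrite Cmod_0. lra.
Qed.

Lemma DD_plus S F G z0 d LF LG : DD S F z0 d LF -> DD S G z0 d LG ->
  DD S (fun z => F z + G z)%C z0 d (LF + LG)%C.
Proof.
  intros HF HG eps Heps.
  destruct (HF (eps/2)) as [d1 [Hd1 H1]]; [lra|].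
  destruct (HG (eps/2)) as [d2 [Hd2 H2]]; [lra|].
  exists (Rmin d1 d2). split; [apply Rmin_pos; auto|].
  intros t St Ht Hlt.
  specialize (H1 t St Ht (Rlt_le_trans _ _ _ Hlt (Rmin_l _ _))).
  specialize (H2 t St Ht (Rlt_le_trans _ _ _ Hlt (Rmin_r _ _))).
  replace ((F (z0 + RtoC t * d) + G (z0 + RtoC t * d) - (F z0 + G z0)) / (RtoC t * d) - (LF + LG))%C
    with (((F (z0 + RtoC t * d) - F z0) / (RtoC t * d) - LF) + ((G (z0 + RtoC t * d) - G z0) / (RtoC t * d) - LG))%C
    by (unfold Cdiv; ring).
  eapply Rle_lt_trans; [apply Cmod_triangle|lra].
Qed.

Lemma DD_mult S F G z0 d LF LG : d <> RtoC 0 -> DD S F z0 d LF -> DD S G z0 d LG ->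
  DD S (fun z => F z * G z)%C z0 d (LF * G z0 + F z0 * LG)%C.
Proof.
  intros Hd HF HG eps Heps.
  pose proof (proj1 (Cmod_gt_0 d) Hd) as Hdp.
  set (A := Cmod (G z0) + 1). set (Bv := Cmod (F z0) + 1).
  set (cc := (Cmod LG + 1) * Cmod d).
  assert (HA : 0 < A) by (unfold A; pose proof (Cmod_ge_0 (G z0)); lra).
  assert (HBv : 0 < Bv) by (unfold Bv; pose proof (Cmod_ge_0 (F z0)); lra).
  assert (Hcc : 0 < cc) by (unfold cc; pose proof (Cmod_ge_0 LG); nra).
  destruct (HF (eps / (3 * A))) as [d1 [Hd1 H1]]; [apply Rdiv_lt_0_compat; lra|].
  destruct (HG (Rmin 1 (eps / (3 * Bv)))) as [d2 [Hd2 H2]].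
  { apply Rmin_pos; [lra|apply Rdiv_lt_0_compat; lra]. }
  set (d3 := Rmin 1 (eps / (3 * (Cmod LF + 1))) / cc).
  assert (Hd3 : 0 < d3).
  { unfold d3. apply Rdiv_lt_0_compat; auto. apply Rmin_pos; [lra|]. apply Rdiv_lt_0_compat; [lra|].
    pose proof (Cmod_ge_0 LF). lra. }
  exists (Rmin d1 (Rmin d2 d3)). split; [apply Rmin_pos; auto; apply Rmin_pos; auto|].
  intros t St Ht Hlt.
  assert (Ht1 : Rabs t < d1) by (eapply Rlt_le_trans; [apply Hlt|apply Rmin_l]).
  assert (Ht2 : Rabs t < d2) by (eapply Rlt_le_trans; [apply Hlt|]; eapply Rle_trans; [apply Rmin_r|apply Rmin_l]).
  assert (Ht3 : Rabs t < d3) by (eapply Rlt_le_trans; [apply Hlt|]; eapply Rle_trans; [apply Rmin_r|apply Rmin_r]).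
  specialize (H1 t St Ht Ht1). specialize (H2 t St Ht Ht2).
  set (X := (RtoC t * d)%C) in *.
  assert (HX : X <> RtoC 0) by (apply td_neq0; auto).
  set (F1 := F (z0 + X)%C) in *. set (G1 := G (z0 + X)%C) in *.
  set (qF := ((F1 - F z0) / X)%C) in *. set (qG := ((G1 - G z0) / X)%C) in *.
  assert (EG : (G1 - G z0)%C = (X * qG)%C) by (unfold qG; field; auto).
  replace ((F1 * G1 - F z0 * G z0) / X - (LF * G z0 + F z0 * LG))%C
    with ((qF - LF) * G1 + LF * (G1 - G z0) + F z0 * (qG - LG))%C
    by (unfold qF, qG; field; auto).
  assert (HqG : Cmod qG <= Cmod LG + 1).
  { replace qG with ((qG - LG) + LG)%C by ring. eapply Rle_trans; [apply Cmod_triangle|].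
    assert (Cmod (qG - LG)%C < 1) by (eapply Rlt_le_trans; [apply H2|apply Rmin_l]). lra. }
  assert (HdG : Cmod (G1 - G z0)%C <= Rabs t * cc).
  { rewrite EG, Cmod_mult. unfold X; rewrite Cmod_td. unfold cc.
    pose proof (Rabs_pos t). pose proof (Cmod_ge_0 d). 
    replace (Rabs t * ((Cmod LG + 1) * Cmod d)) with (Rabs t * Cmod d * (Cmod LG + 1)) by ring.
    apply Rmult_le_compat_l; auto. apply Rmult_le_pos; auto. }
  assert (Htc : Rabs t * cc < Rmin 1 (eps / (3 * (Cmod LF + 1)))).
  { unfold d3 in Ht3. apply (Rmult_lt_compat_r cc) in Ht3; auto.
    unfold Rdiv in Ht3. rewrite Rmult_assoc, Rinv_l, Rmult_1_r in Ht3; lra. }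
  assert (HG1 : Cmod G1 <= A).
  { replace G1 with ((G1 - G z0) + G z0)%C by ring. eapply Rle_trans; [apply Cmod_triangle|].
    unfold A. assert (Rmin 1 (eps / (3 * (Cmod LF + 1))) <= 1) by apply Rmin_l. lra. }
  eapply Rle_lt_trans; [apply Cmod_triangle|].
  eapply Rle_lt_trans; [apply Rplus_le_compat_r; apply Cmod_triangle|].
  rewrite !Cmod_mult.
  assert (T1 : Cmod (qF - LF)%C * Cmod G1 <= eps / (3 * A) * A).
  { apply Rmult_le_compat; try apply Cmod_ge_0; lra. }
  assert (T2 : Cmod LF * Cmod (G1 - G z0)%C <= Cmod LF * (eps / (3 * (Cmod LF + 1)))).
  { apply Rmult_le_compat_l; [apply Cmod_ge_0|].
    assert (Rmin 1 (eps / (3 * (Cmod LF + 1))) <= eps / (3 * (Cmod LF + 1))) by apply Rmin_r. lra. }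
  assert (T3 : Cmod (F z0) * Cmod (qG - LG)%C <= Cmod (F z0) * (eps / (3 * Bv))).
  { apply Rmult_le_compat_l; [apply Cmod_ge_0|].
    assert (Rmin 1 (eps / (3 * Bv)) <= eps / (3 * Bv)) by apply Rmin_r. lra. }
  assert (E1 : eps / (3 * A) * A = eps / 3) by (field; lra).
  assert (E2 : Cmod LF * (eps / (3 * (Cmod LF + 1))) < eps / 3).
  { pose proof (Cmod_ge_0 LF). apply Rmult_lt_reg_r with (Cmod LF + 1); [lra|].
    replace (Cmod LF * (eps / (3 * (Cmod LF + 1))) * (Cmod LF + 1)) with (Cmod LF * (eps / 3)) by (field; lra).
    nra. }
  assert (E3 : Cmod (F z0) * (eps / (3 * Bv)) < eps / 3).
  { pose proof (Cmod_ge_0 (F z0)). apply Rmult_lt_reg_r with Bv; [lra|].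
    replace (Cmod (F z0) * (eps / (3 * Bv)) * Bv) with (Cmod (F z0) * (eps / 3)) by (field; lra).
    unfold Bv. nra. }
  lra.
Qed.

Lemma DD_scal S F z0 d c LF : d <> RtoC 0 -> DD S F z0 d LF -> DD S (fun z => c * F z)%C z0 d (c * LF)%C.
Proof.
  intros Hd HF. eapply DD_Leq; [|apply (DD_mult S (fun _ => c) F z0 d (RtoC 0) LF Hd (DD_const S c z0 d) HF)].
  ring.
Qed.

Lemma DD_opp S F z0 d LF : d <> RtoC 0 -> DD S F z0 d LF -> DD S (fun z => - F z)%C z0 d (- LF)%C.
Proof.
  intros Hd HF. apply DD_fext with (fun z => RtoC (Ropp 1) * F z)%C.
  { intros z. rewrite RtoC_opp. ring. }
  eapply DD_Leq; [|apply (DD_mult S (fun _ => RtoC (Ropp 1)) F z0 d (RtoC 0) LF Hd (DD_const S _ z0 d) HF)].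
  rewrite RtoC_opp. ring.
Qed.
Lemma DD_real S F z0 d (phi1 phi2 : R -> R) l1 l2 r : d <> RtoC 0 -> 0 < r ->
  (forall t, Rabs t < r -> (S t \/ t = 0) -> F (z0 + RtoC t * d)%C = (phi1 t, phi2 t)) ->
  derivable_pt_lim phi1 0 l1 -> derivable_pt_lim phi2 0 l2 ->
  DD S F z0 d ((l1, l2) / d)%C.
Proof.
  intros Hd Hr HF D1 D2 eps Heps.
  pose proof (proj1 (Cmod_gt_0 d) Hd) as Hdp.
  assert (He2 : 0 < eps * Cmod d / 2) by (apply Rdiv_lt_0_compat; nra).
  destruct (D1 _ He2) as [d1 H1]. destruct (D2 _ He2) as [d2 H2].
  exists (Rmin r (Rmin d1 d2)). split.
  { apply Rmin_pos; auto; apply Rmin_pos; apply cond_pos. }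
  intros t St Ht Hlt.
  assert (Ht0 : Rabs t < r) by (eapply Rlt_le_trans; [apply Hlt|apply Rmin_l]).
  assert (Ht1 : Rabs t < d1) by (eapply Rlt_le_trans; [apply Hlt|]; eapply Rle_trans; [apply Rmin_r|apply Rmin_l]).
  assert (Ht2 : Rabs t < d2) by (eapply Rlt_le_trans; [apply Hlt|]; eapply Rle_trans; [apply Rmin_r|apply Rmin_r]).
  specialize (H1 t Ht Ht1). specialize (H2 t Ht Ht2).
  rewrite Rplus_0_l in H1, H2.
  rewrite (HF t Ht0 (or_introl St)).
  assert (E0 : F z0 = (phi1 0, phi2 0)).
  { rewrite <- (HF 0); [|rewrite Rabs_R0; auto|auto]. f_equal. ring. }
  rewrite E0.
  set (q1 := (phi1 t - phi1 0) / t). set (q2 := (phi2 t - phi2 0) / t).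
  assert (E : (((phi1 t, phi2 t) - (phi1 0, phi2 0)) / (RtoC t * d) - (l1, l2) / d)%C = ((Rminus q1 l1, Rminus q2 l2) / d)%C).
  { assert (Ec : ((phi1 t, phi2 t) - (phi1 0, phi2 0))%C = (RtoC t * (q1, q2))%C).
    { unfold q1, q2, Cminus, Cplus, Copp, Cmult, RtoC; simpl. f_equal; field; auto. }
    rewrite Ec.
    assert (Ec2 : ((Rminus q1 l1, Rminus q2 l2) = (q1, q2) - (l1, l2))%C).
    { unfold Cminus, Cplus, Copp; simpl. f_equal; ring. }
    rewrite Ec2. field. split; auto. intros Ht'. apply Ht. injection Ht'; auto. }
  rewrite E, Cmod_div by auto.
  apply Rmult_lt_reg_r with (Cmod d); auto. unfold Rdiv. rewrite Rmult_assoc, Rinv_l, Rmult_1_r by lra.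
  eapply Rle_lt_trans; [apply Cmod_le_ReIm|]. simpl. fold q1 q2 in H1, H2. lra.
Qed.

Lemma Cinv_0 : Cinv (RtoC 0) = RtoC 0.
Proof. unfold Cinv, RtoC; simpl. f_equal; unfold Rdiv; ring. Qed.

Lemma Cmod_lower (a b : C) : Cmod a - Cmod b <= Cmod (a + b)%C.
Proof.
  pose proof (Cmod_triangle (a + b)%C (- b)%C). rewrite Cmod_opp in H.
  replace (a + b + - b)%C with a in H by ring. lra.
Qed.

Lemma DD_inv S z0 d : d <> RtoC 0 -> z0 <> RtoC 0 ->
  DD S (fun z => Cinv z) z0 d (- (Cinv z0 * Cinv z0))%C.
Proof.
  intros Hd Hz. pose proof (proj1 (Cmod_gt_0 z0) Hz) as Hzp.
  apply DD_of_bound; auto.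
  exists (2 / Cmod z0 ^ 3), (Cmod z0 / 2). repeat split.
  - lra.
  - apply Rlt_le, Rdiv_lt_0_compat; [lra|apply pow_lt; auto].
  - intros h Hh.
    assert (Hzh : Cmod z0 / 2 <= Cmod (z0 + h)%C) by (pose proof (Cmod_lower z0 h); lra).
    assert (Hzh0 : (z0 + h)%C <> RtoC 0).
    { intros E. rewrite E, Cmod_0 in Hzh. lra. }
    replace (Cinv (z0 + h) - Cinv z0 - h * - (Cinv z0 * Cinv z0))%C
      with (h * h / (z0 * z0 * (z0 + h)))%C by (field; auto).
    rewrite Cmod_div, !Cmod_mult.
    2: { apply Cmult_neq_0; auto. apply Cmult_neq_0; auto. }
    apply Rmult_le_reg_r with (Cmod z0 * Cmod z0 * Cmod (z0 + h)%C).
    { apply Rmult_lt_0_compat; [apply Rmult_lt_0_compat|]; lra. }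
    unfold Rdiv. rewrite Rmult_assoc, Rinv_l, Rmult_1_r.
    2: { apply Rgt_not_eq. apply Rmult_lt_0_compat; [apply Rmult_lt_0_compat|]; lra. }
    simpl. pose proof (Cmod_ge_0 h).
    replace (2 * / (Cmod z0 * (Cmod z0 * (Cmod z0 * 1))) * (Cmod h * (Cmod h * 1)) * (Cmod z0 * Cmod z0 * Cmod (z0 + h)%C))
      with (Cmod h * Cmod h * (2 * Cmod (z0 + h)%C / Cmod z0)) by (field; lra).
    rewrite <- (Rmult_1_r (Cmod h * Cmod h)) at 1.
    apply Rmult_le_compat_l; [nra|].
    apply Rmult_le_reg_r with (Cmod z0); auto. unfold Rdiv. rewrite Rmult_assoc, Rinv_l by lra. lra.
Qed.

Lemma Cdiv2 (z : C) : Cdiv z (RtoC 2) = (RtoC (/ 2) * z)%C.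
Proof. destruct z as [x y]. unfold Cdiv, Cinv, Cmult, RtoC; simpl. f_equal; field. Qed.

Lemma DD_Gs (Sp : R -> Prop) (b : nat -> R) (e e' : nat -> nat) z0 d : d <> RtoC 0 ->
  good b -> (forall k, (e k <= 2 * k + 1)%nat) -> (forall k, e k = S (e' k) \/ (e k = O /\ e' k = O)) ->
  DD Sp (fun z => Gs b e (Cdiv z (RtoC 2))) z0 d
     (RtoC (/ 2) * Gs (fun k => Rmult (b k) (INR (e k))) e' (Cdiv z0 (RtoC 2)))%C.
Proof.
  intros Hd Hg He He'. apply DD_of_bound; auto.
  destruct (Gs_err b e e' (Cdiv z0 (RtoC 2)) Hg He He') as [K [HK HB]].
  exists K, 1. repeat split; auto; try lra.
  intros h Hh.
  assert (Hh2 : Cmod (RtoC (/ 2) * h)%C <= 1).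
  { rewrite Cmod_mult, Cmod_R, Rabs_pos_eq by lra. pose proof (Cmod_ge_0 h). lra. }
  specialize (HB _ Hh2).
  replace (Cdiv (z0 + h) (RtoC 2)) with (Cdiv z0 (RtoC 2) + RtoC (/ 2) * h)%C by (rewrite !Cdiv2; ring).
  replace (h * (RtoC (/ 2) * Gs (fun k => Rmult (b k) (INR (e k))) e' (Cdiv z0 (RtoC 2))))%C
    with (RtoC (/ 2) * h * Gs (fun k => Rmult (b k) (INR (e k))) e' (Cdiv z0 (RtoC 2)))%C by ring.
  eapply Rle_trans; [apply HB|].
  rewrite Cmod_mult, Cmod_R, Rabs_pos_eq by lra.
  pose proof (Cmod_ge_0 h). apply Rmult_le_compat_l; auto. simpl. nra.
Qed.
Lemma Cinv_iy (y : R) : 0 < y -> Cinv (0, y) = (0, - / y).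
Proof. intros Hy. unfold Cinv; simpl. f_equal; field; lra. Qed.

Lemma DD_log_h (y : R) : 0 < y ->
  DD (fun t => 0 < t) (fun z => Clog (Cdiv z (RtoC 2))) (0, y) (RtoC 1) (Cinv (0, y)).
Proof.
  intros Hy.
  eapply DD_Leq; [|apply (DD_real _ _ _ _ (fun t => ln (sqrt ((t/2)^2 + (y/2)^2))) (fun t => PI/2 - atan (t / y)) 0 (- / y) 1)].
  - rewrite Cinv_iy by auto. unfold Cdiv, Cinv, Cmult, RtoC; simpl. f_equal; field; lra.
  - intros E. injection E. lra.
  - lra.
  - intros t Ht Hs.
    assert (E1 : ((0, y) + RtoC t * RtoC 1)%C = (t, y)).
    { unfold Cplus, Cmult, RtoC; simpl. f_equal; ring. }
    rewrite E1. rewrite Cdiv2.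
    assert (E2 : (RtoC (/ 2) * (t, y))%C = (t / 2, y / 2)).
    { unfold Cmult, RtoC; simpl. f_equal; field. }
    rewrite E2. unfold Clog, Cmod. simpl fst; simpl snd. f_equal.
    unfold Carg, Re, Im; simpl fst; simpl snd.
    destruct Hs as [Ht0|Ht0].
    + destruct (Rlt_dec 0 (t / 2)) as [_|N]; [|exfalso; lra].
      replace (y / 2 / (t / 2)) with (/ (t / y)) by (field; split; lra).
      apply atan_inv. apply Rdiv_lt_0_compat; lra.
    + subst t. destruct (Rlt_dec 0 (0 / 2)) as [N|_]; [exfalso; lra|].
      destruct (Rlt_dec (0 / 2) 0) as [N|_]; [exfalso; lra|].
      destruct (Rlt_dec 0 (y / 2)) as [_|N]; [|exfalso; lra].
      replace (0 / y) with 0 by (field; lra). rewrite atan_0. ring.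
  - apply is_derive_Reals. auto_derive.
    + split; [nra|]. split; auto. apply sqrt_lt_R0. nra.
    + field. apply Rgt_not_eq. apply sqrt_lt_R0. nra.
  - apply is_derive_Reals. auto_derive; auto. field. lra.
Qed.

Lemma DD_log_v (y : R) : 0 < y ->
  DD (fun _ => True) (fun z => Clog (Cdiv z (RtoC 2))) (0, y) Ci (Cinv (0, y)).
Proof.
  intros Hy.
  eapply DD_Leq; [|apply (DD_real _ _ _ _ (fun t => ln (sqrt (0^2 + ((y+t)/2)^2))) (fun t => PI/2) (/ y) 0 y)].
  - rewrite Cinv_iy by auto. unfold Cdiv, Cinv, Cmult, RtoC, Ci; simpl. f_equal; field; lra.
  - intros E. injection E. lra.
  - lra.
  - intros t Ht Hs.
    assert (Hyt : 0 < y + t) by (apply Rabs_def2 in Ht; lra).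
    assert (E1 : ((0, y) + RtoC t * Ci)%C = (0, y + t)).
    { unfold Cplus, Cmult, RtoC, Ci; simpl. f_equal; ring. }
    rewrite E1. rewrite Cdiv2.
    assert (E2 : (RtoC (/ 2) * (0, Rplus y t))%C = (0, (y + t) / 2)).
    { unfold Cmult, RtoC; simpl. f_equal; field. }
    rewrite E2. unfold Clog, Cmod. simpl fst; simpl snd. f_equal.
    unfold Carg, Re, Im; simpl fst; simpl snd.
    destruct (Rlt_dec 0 0) as [N|_]; [exfalso; lra|].
    destruct (Rlt_dec 0 ((y + t) / 2)) as [_|N]; [|exfalso; lra]. auto.
  - apply is_derive_Reals. auto_derive.
    + split; [nra|]. split; auto. apply sqrt_lt_R0. nra.
    + replace (0 * (0 * 1) + (y + 0) * / 2 * ((y + 0) * / 2 * 1)) with ((y / 2) * (y / 2)) by field.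
      rewrite sqrt_square by lra. field. lra.
  - apply is_derive_Reals. auto_derive; auto.
Qed.
Definition aC (k : nat) : R := (-1) ^ k / (INR (fact k) * INR (fact (S k))).
Definition cC (k : nat) : R := digamma_nat k + digamma_nat (S k).
Definition sC (k : nat) : R := cC k * aC k.
Definition e1 (k : nat) : nat := (2 * k + 1)%nat.
Definition e0 (k : nat) : nat := (2 * k)%nat.
Definition e0m (k : nat) : nat := (2 * k - 1)%nat.
Definition aJ1 (k : nat) : R := aC k * INR (e1 k).
Definition aJ2 (k : nat) : R := aJ1 k * INR (e0 k).
Definition sS1 (k : nat) : R := sC k * INR (e1 k).
Definition sS2 (k : nat) : R := sS1 k * INR (e0 k).
Definition d0 (k : nat) : R := match k with O => 1 | S _ => 0 end.

Lemma e1_le k : (e1 k <= 2 * k + 1)%nat. Proof. unfold e1; lia. Qed.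
Lemma e0_le k : (e0 k <= 2 * k + 1)%nat. Proof. unfold e0; lia. Qed.
Lemma e0m_le k : (e0m k <= 2 * k + 1)%nat. Proof. unfold e0m; lia. Qed.
Lemma e1_S k : e1 k = S (e0 k) \/ (e1 k = O /\ e0 k = O). Proof. left; unfold e1, e0; lia. Qed.
Lemma e0_S k : e0 k = S (e0m k) \/ (e0 k = O /\ e0m k = O).
Proof. destruct k; [right; split; reflexivity|left; unfold e0, e0m; lia]. Qed.

Lemma INR_fact_pos k : 0 < INR (fact k).
Proof. apply lt_0_INR, lt_O_fact. Qed.

Lemma ex_series_expM (M : R) : ex_series (fun k => M ^ k / INR (fact k)).
Proof.
  pose proof (is_exp_Reals M) as H. unfold is_pseries in H.
  apply ex_series_ext with (fun k => scal (pow_n M k) (/ INR (fact k))).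
  - intros k. rewrite pow_n_pow. reflexivity.
  - exists (exp M). exact H.
Qed.

Lemma good_aC : good aC.
Proof.
  intros M HM. apply ex_series_le_R with (fun k => M ^ k / INR (fact k)); [|apply ex_series_expM].
  intros k. unfold aC. pose proof (INR_fact_pos k). pose proof (INR_fact_pos (S k)).
  assert (HMk : 0 < M ^ k) by (apply pow_lt; auto).
  rewrite Rabs_mult, Rabs_Rabsolu, (Rabs_pos_eq (M ^ k)) by lra.
  unfold Rdiv. rewrite Rabs_mult, pow_1_abs, Rmult_1_l.
  rewrite Rabs_pos_eq by (left; apply Rinv_0_lt_compat; nra).
  rewrite Rinv_mult.
  assert (1 <= INR (fact (S k))).
  { apply (le_INR 1). apply lt_O_fact. }
  assert (/ INR (fact (S k)) <= 1).
  { rewrite <- Rinv_1. apply Rinv_le_contravar; lra. }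
  assert (0 < / INR (fact k)) by (apply Rinv_0_lt_compat; auto).
  assert (0 < / INR (fact (S k))) by (apply Rinv_0_lt_compat; lra).
  rewrite (Rmult_comm (M ^ k)). apply Rmult_le_compat_r; [lra|].
  rewrite <- (Rmult_1_r (/ INR (fact k))) at 2. apply Rmult_le_compat_l; lra.
Qed.

Lemma harmonic_S n : harmonic (S n) = harmonic n + / INR (S n).
Proof. destruct n; [simpl; field|]. simpl harmonic. reflexivity. Qed.

Lemma harmonic_bound n : 0 <= harmonic n <= INR n.
Proof.
  induction n.
  - simpl; lra.
  - rewrite harmonic_S. pose proof (S_INR n). pose proof (pos_INR n).
    assert (0 < / INR (S n)) by (apply Rinv_0_lt_compat, lt_0_INR; lia).
    assert (/ INR (S n) <= 1).
    { rewrite <- Rinv_1. apply Rinv_le_contravar; [lra|]. lra. }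
    lra.
Qed.

Lemma good_sC : good sC.
Proof.
  apply good_le with aC (2 * Rabs euler_gamma + 1); [|apply good_aC].
  intros k. unfold sC, cC, digamma_nat. rewrite Rabs_mult.
  pose proof (harmonic_bound k). pose proof (harmonic_bound (S k)).
  pose proof (INR_2k1_le k). rewrite plus_INR, mult_INR in H1. rewrite S_INR in H0. simpl INR in H1.
  pose proof (Rabs_pos (aC k)). pose proof (pow_R1_Rle 3 k ltac:(lra)).
  pose proof (Rle_abs euler_gamma). pose proof (Rle_abs (- euler_gamma)). rewrite Rabs_Ropp in H5.
  assert (Rabs (- euler_gamma + harmonic k + (- euler_gamma + harmonic (S k))) <= (2 * Rabs euler_gamma + 1) * 3 ^ k).
  { apply Rabs_le. split; nra. }
  apply Rmult_le_compat_r with (r := Rabs (aC k)) in H6; auto.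
Qed.

Lemma good_aJ1 : good aJ1. Proof. apply good_mulINR; [apply e1_le|apply good_aC]. Qed.
Lemma good_aJ2 : good aJ2.
Proof. unfold aJ2. apply (good_mulINR aJ1 e0); [apply e0_le|apply good_aJ1]. Qed.
Lemma good_sS1 : good sS1. Proof. apply good_mulINR; [apply e1_le|apply good_sC]. Qed.
Lemma good_sS2 : good sS2.
Proof. unfold sS2. apply (good_mulINR sS1 e0); [apply e0_le|apply good_sS1]. Qed.
Lemma good_d0 : good d0.
Proof.
  apply good_le with aC 1; [|apply good_aC]. intros k; destruct k.
  - unfold d0, aC. simpl. replace (1 / (1 * 1)) with 1 by field. rewrite Rabs_R1. lra.
  - unfold d0. rewrite Rabs_R0. pose proof (Rabs_pos (aC (S k))). pose proof (pow_le 3 (S k) ltac:(lra)). nra.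
Qed.

Lemma Gs_plus b b' e w : good b -> good b' -> (forall k, (e k <= 2 * k + 1)%nat) ->
  (Gs b e w + Gs b' e w)%C = Gs (fun k => b k + b' k) e w.
Proof.
  intros H1 H2 He. unfold Gs. rewrite <- CSeries_plus by (apply good_Cex; auto).
  apply CSeries_ext. intros k. rewrite RtoC_plus. ring.
Qed.

Lemma Gs_scal c b e w : good b -> (forall k, (e k <= 2 * k + 1)%nat) ->
  (RtoC c * Gs b e w)%C = Gs (fun k => c * b k) e w.
Proof.
  intros H1 He. unfold Gs. rewrite <- CSeries_scal by (apply good_Cex; auto).
  apply CSeries_ext. intros k. rewrite RtoC_mult. ring.
Qed.

Lemma Gs_zero b e w : (forall k, b k = 0) -> Gs b e w = RtoC 0.
Proof.
  intros H. unfold Gs. apply CSeries_zero. intros k. rewrite H. ring.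
Qed.

Lemma Gs_w_e0 b w : good b -> (w * Gs b e0 w)%C = Gs b e1 w.
Proof.
  intros H. unfold Gs. rewrite <- CSeries_scal by (apply good_Cex; auto; apply e0_le).
  apply CSeries_ext. intros k. unfold e1, e0. rewrite Nat.add_1_r, Cpow_S. ring.
Qed.

Lemma Gs_ww_e0m b w : good b -> b O = 0 -> (w * w * Gs b e0m w)%C = Gs b e1 w.
Proof.
  intros H H0. unfold Gs. rewrite <- CSeries_scal by (apply good_Cex; auto; apply e0m_le).
  apply CSeries_ext. intros k. destruct k.
  - rewrite H0. simpl. ring.
  - unfold e1, e0m. replace (2 * S k + 1)%nat with (S (S (2 * S k - 1))) by lia. rewrite !Cpow_S. ring.
Qed.

Lemma Gs_ww_e1 b w : good b -> (w * w * Gs b e1 w)%C = Gs (shiftR b) e1 w.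
Proof.
  intros H. unfold Gs. rewrite <- CSeries_scal by (apply good_Cex; auto; apply e1_le).
  rewrite (CSeries_shift (fun k => RtoC (shiftR b k) * Cpow w (e1 k))%C).
  - apply CSeries_ext. intros k. simpl shiftR. unfold e1.
    replace (2 * S k + 1)%nat with (S (S (2 * k + 1))) by lia. rewrite !Cpow_S. ring.
  - simpl shiftR. ring.
Qed.

Lemma CSeries_incr (u : nat -> C) : Cex u -> CSeries u = (u O + CSeries (fun k => u (S k)))%C.
Proof.
  intros [H1 H2]. unfold CSeries. rewrite (Series_incr_1 (fun n => Re (u n))) by auto.
  rewrite (Series_incr_1 (fun n => Im (u n))) by auto. reflexivity.
Qed.

Lemma Gs_d0 w : Gs d0 e1 w = w.
Proof.
  unfold Gs. rewrite CSeries_incr by (apply (good_Cex d0 e1 w good_d0 e1_le)).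
  rewrite CSeries_zero.
  - simpl. unfold e1; simpl. ring.
  - intros k. simpl d0. ring.
Qed.
Lemma aC_S j : aC (S j) = - aC j / ((INR j + 1) * (INR j + 2)).
Proof.
  unfold aC. rewrite !fact_simpl, !mult_INR, !S_INR.
  pose proof (INR_fact_pos j). pose proof (INR_fact_pos (S j)). rewrite fact_simpl, mult_INR, S_INR in H0.
  pose proof (pos_INR j). simpl pow. field. repeat split; lra.
Qed.

Lemma cC_S j : cC (S j) = cC j + / (INR j + 1) + / (INR j + 2).
Proof.
  unfold cC, digamma_nat. rewrite (harmonic_S (S j)), (harmonic_S j), !S_INR.
  replace (INR j + 1 + 1) with (INR j + 2) by ring. ring.
Qed.

Lemma INR_e1 k : INR (e1 k) = 2 * INR k + 1.
Proof. unfold e1. rewrite plus_INR, mult_INR. simpl. ring. Qed.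
Lemma INR_e0 k : INR (e0 k) = 2 * INR k.
Proof. unfold e0. rewrite mult_INR. simpl. ring. Qed.

Lemma Cminus_as (a b : C) : (a - b)%C = (a + RtoC (Ropp 1) * b)%C.
Proof. rewrite RtoC_opp. ring. Qed.

Lemma good_shiftR_aC : good (shiftR aC). Proof. apply good_shiftR, good_aC. Qed.
Lemma good_shiftR_sC : good (shiftR sC). Proof. apply good_shiftR, good_sC. Qed.

Lemma good_scal' (c : R) (b : nat -> R) : good b -> good (fun k => c * b k).
Proof. apply good_scal. Qed.
Lemma good_plus' (b b' : nat -> R) : good b -> good b' -> good (fun k => b k + b' k).
Proof. apply good_plus. Qed.

Create HintDb gooddb.
Hint Resolve good_aC good_sC good_aJ1 good_aJ2 good_sS1 good_sS2 good_d0 good_shiftR_aC good_shiftR_sC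
  good_scal' good_plus' e1_le e0_le e0m_le : gooddb.

Ltac gs_collect :=
  repeat first [ rewrite Gs_scal by auto with gooddb | rewrite Gs_plus by auto with gooddb ].

Lemma I1_w (w : C) :
  (w * w * Gs aJ2 e0m w + w * Gs aJ1 e0 w + RtoC 4 * (w * w * Gs aC e1 w) - Gs aC e1 w)%C = RtoC 0.
Proof.
  rewrite Gs_ww_e0m, Gs_w_e0, Gs_ww_e1; auto using good_aJ2, good_aJ1, good_aC.
  2: { unfold aJ2. rewrite INR_e0. simpl. ring. }
  rewrite Cminus_as. gs_collect.
  apply Gs_zero. intros k. destruct k as [|j].
  - unfold aJ2, aJ1. rewrite INR_e0, INR_e1. simpl. ring.
  - unfold aJ2, aJ1. rewrite INR_e0, INR_e1, aC_S. simpl shiftR. rewrite S_INR.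
    pose proof (pos_INR j). field. lra.
Qed.

Lemma I2_w (w : C) :
  (w * w * Gs sS2 e0m w + w * Gs sS1 e0 w + RtoC 4 * (w * w * Gs sC e1 w) - Gs sC e1 w
   - (RtoC 4 * (w * Gs aJ1 e0 w) - RtoC 4 * w))%C = RtoC 0.
Proof.
  rewrite Gs_ww_e0m, !Gs_w_e0, Gs_ww_e1; auto using good_sS2, good_sS1, good_sC, good_aJ1.
  2: { unfold sS2. rewrite INR_e0. simpl. ring. }
  replace (RtoC 4 * w)%C with (RtoC 4 * Gs d0 e1 w)%C by (rewrite Gs_d0; auto).
  rewrite !Cminus_as. gs_collect.
  apply Gs_zero. intros k. destruct k as [|j].
  - unfold sS2, sS1, aJ1, sC. rewrite INR_e0, INR_e1. simpl. unfold aC. simpl. field.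
  - unfold sS2, sS1, aJ1, sC. rewrite INR_e0, INR_e1, cC_S, aC_S. simpl shiftR. simpl d0. rewrite S_INR.
    pose proof (pos_INR j). field. lra.
Qed.
Definition Jf (z : C) : C := besselJ1 z.
Definition J1f (z : C) : C := (RtoC (/ 2) * Gs aJ1 e0 (Cdiv z (RtoC 2)))%C.
Definition J2f (z : C) : C := (RtoC (/ 2) * (RtoC (/ 2) * Gs aJ2 e0m (Cdiv z (RtoC 2))))%C.
Definition Sf (z : C) : C := CSeries (fun k => Cmult (RtoC (digamma_nat k + digamma_nat (S k))) (bessel1_term z k)).
Definition S1f (z : C) : C := (RtoC (/ 2) * Gs sS1 e0 (Cdiv z (RtoC 2)))%C.
Definition S2f (z : C) : C := (RtoC (/ 2) * (RtoC (/ 2) * Gs sS2 e0m (Cdiv z (RtoC 2))))%C.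
Definition Lg (z : C) : C := Clog (Cdiv z (RtoC 2)).

Definition Hp (z : C) : C :=
  (J1f z + Ci * (RtoC (2 / PI) * (Cinv z * Cinv z) + RtoC (2 / PI) * (Cinv z * Jf z + Lg z * J1f z)
                 + - (RtoC (/ PI) * S1f z)))%C.

Definition Hpp (z : C) : C :=
  (J2f z + Ci * (RtoC (2 / PI) * (RtoC (Ropp 2) * (Cinv z * Cinv z * Cinv z))
     + RtoC (2 / PI) * (- (Cinv z * Cinv z) * Jf z + Cinv z * J1f z + Cinv z * J1f z + Lg z * J2f z)
     + - (RtoC (/ PI) * S2f z)))%C.

Lemma Jf_Gs z : Jf z = Gs aC e1 (Cdiv z (RtoC 2)).
Proof. reflexivity. Qed.

Lemma Sf_Gs z : Sf z = Gs sC e1 (Cdiv z (RtoC 2)).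
Proof.
  unfold Sf, Gs, bessel1_term. apply CSeries_ext. intros k. unfold sC, cC, aC, e1.
  rewrite RtoC_mult. ring.
Qed.

Lemma PI_neq0 : PI <> 0.
Proof. pose proof PI_RGT_0. lra. Qed.

Lemma Cdiv_2piz z : Cdiv (RtoC 2) (Cmult (RtoC PI) z) = (RtoC (2 / PI) * Cinv z)%C.
Proof.
  destruct (Ceq_dec z (RtoC 0)) as [E|E].
  - subst z. rewrite Cmult_0_r. unfold Cdiv. rewrite Cinv_0. ring.
  - rewrite RtoC_div by apply PI_neq0. field. split; auto.
    intros H. injection H. apply PI_neq0.
Qed.

Section DDH.
Variable (Sp : R -> Prop) (z0 d : C).
Hypothesis (Hd : d <> RtoC 0) (Hz : z0 <> RtoC 0).
Hypothesis (Hlog : DD Sp Lg z0 d (Cinv z0)).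

Lemma DD_Jf : DD Sp Jf z0 d (J1f z0).
Proof.
  eapply DD_Leq; [|apply DD_fext with (fun z => Gs aC e1 (Cdiv z (RtoC 2)));
    [intros; symmetry; apply Jf_Gs|apply (DD_Gs Sp aC e1 e0); auto using good_aC, e1_le, e1_S]].
  reflexivity.
Qed.

Lemma DD_J1f : DD Sp J1f z0 d (J2f z0).
Proof.
  unfold J1f. eapply DD_Leq; [|apply DD_scal; auto; apply (DD_Gs Sp aJ1 e0 e0m); auto using good_aJ1, e0_le, e0_S].
  reflexivity.
Qed.

Lemma DD_Sf : DD Sp Sf z0 d (S1f z0).
Proof.
  eapply DD_Leq; [|apply DD_fext with (fun z => Gs sC e1 (Cdiv z (RtoC 2)));
    [intros; symmetry; apply Sf_Gs|apply (DD_Gs Sp sC e1 e0); auto using good_sC, e1_le, e1_S]].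
  reflexivity.
Qed.

Lemma DD_S1f : DD Sp S1f z0 d (S2f z0).
Proof.
  unfold S1f. eapply DD_Leq; [|apply DD_scal; auto; apply (DD_Gs Sp sS1 e0 e0m); auto using good_sS1, e0_le, e0_S].
  reflexivity.
Qed.

Lemma hankel1_eq z : hankel1 z =
  (Jf z + Ci * (- (RtoC (2 / PI) * Cinv z) + RtoC (2 / PI) * Lg z * Jf z + - (RtoC (/ PI) * Sf z)))%C.
Proof.
  unfold hankel1, besselY1. rewrite Cdiv_2piz. reflexivity.
Qed.

Lemma DD_hankel : DD Sp hankel1 z0 d (Hp z0).
Proof.
  apply DD_fext with (fun z => (Jf z + Ci * (- (RtoC (2 / PI) * Cinv z) + RtoC (2 / PI) * Lg z * Jf z + - (RtoC (/ PI) * Sf z)))%C).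
  { intros; symmetry; apply hankel1_eq. }
  eapply DD_Leq.
  2: { apply DD_plus. apply DD_Jf. apply DD_scal; auto.
       apply DD_plus. apply DD_plus.
       - apply DD_opp; auto. apply DD_scal; auto. apply DD_inv; auto.
       - apply DD_mult; auto. apply DD_scal; auto. apply Hlog. apply DD_Jf.
       - apply DD_opp; auto. apply DD_scal; auto. apply DD_Sf. }
  unfold Hp. ring.
Qed.

Lemma DD_Hp : DD Sp Hp z0 d (Hpp z0).
Proof.
  eapply DD_Leq.
  2: { unfold Hp. apply DD_plus. apply DD_J1f. apply DD_scal; auto.
       apply DD_plus. apply DD_plus.
       - apply DD_scal; auto. apply DD_mult; auto; apply DD_inv; auto.
       - apply DD_scal; auto. apply DD_plus.
         + apply DD_mult; auto. apply DD_inv; auto. apply DD_Jf.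
         + apply DD_mult; auto. apply Hlog. apply DD_J1f.
       - apply DD_opp; auto. apply DD_scal; auto. apply DD_S1f. }
  unfold Hpp. rewrite RtoC_opp. ring.
Qed.

End DDH.

Lemma bessel_ode (z0 : C) : z0 <> RtoC 0 ->
  (z0 * z0 * Hpp z0 + z0 * Hp z0 + (z0 * z0 - RtoC 1) * hankel1 z0)%C = RtoC 0.
Proof.
  intros Hz. rewrite hankel1_eq. unfold Hpp, Hp, J2f, J1f, S2f, S1f, Jf. rewrite Jf_Gs, Sf_Gs.
  pose proof (I1_w (Cdiv z0 (RtoC 2))) as H1. pose proof (I2_w (Cdiv z0 (RtoC 2))) as H2.
  set (w := Cdiv z0 (RtoC 2)) in *.
  assert (Ez : z0 = (RtoC 2 * w)%C) by (unfold w; rewrite Cdiv2, Cmult_assoc, <- RtoC_mult;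
     replace (2 * / 2) with 1 by field; ring).
  set (A := Gs aC e1 w) in *. set (B := Gs aJ1 e0 w) in *. set (Cc := Gs aJ2 e0m w) in *.
  set (D := Gs sC e1 w) in *. set (E := Gs sS1 e0 w) in *. set (F := Gs sS2 e0m w) in *.
  set (l := Lg z0).
  clearbody w A B Cc D E F l. subst z0.
  assert (Hw : w <> RtoC 0) by (intros Hw; apply Hz; rewrite Hw; ring).
  rewrite !RtoC_div, !RtoC_inv, RtoC_opp by (apply PI_neq0 || lra).
  assert (HP : RtoC PI <> RtoC 0) by (intros HH; injection HH; apply PI_neq0).
  assert (H2' : RtoC 2 <> RtoC 0) by (intros HH; injection HH; lra).
  transitivity ((RtoC 1 + Ci * (RtoC 2 / RtoC PI) * l) *
      (w * w * Cc + w * B + RtoC 4 * (w * w * A) - A)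
    - Ci * (/ RtoC PI) * (w * w * F + w * E + RtoC 4 * (w * w * D) - D - (RtoC 4 * (w * B) - RtoC 4 * w)))%C.
  - field. auto.
  - rewrite H1, H2. ring.
Qed.
Lemma dpl_mult f g x l1 l2 : derivable_pt_lim f x l1 -> derivable_pt_lim g x l2 ->
  derivable_pt_lim (fun t => f t * g t) x (l1 * g x + f x * l2).
Proof. intros H1 H2. exact (derivable_pt_lim_mult f g x l1 l2 H1 H2). Qed.
Lemma dpl_plus f g x l1 l2 : derivable_pt_lim f x l1 -> derivable_pt_lim g x l2 ->
  derivable_pt_lim (fun t => f t + g t) x (l1 + l2).
Proof. intros H1 H2. exact (derivable_pt_lim_plus f g x l1 l2 H1 H2). Qed.
Lemma dpl_minus f g x l1 l2 : derivable_pt_lim f x l1 -> derivable_pt_lim g x l2 ->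
  derivable_pt_lim (fun t => f t - g t) x (l1 - l2).
Proof. intros H1 H2. exact (derivable_pt_lim_minus f g x l1 l2 H1 H2). Qed.
Lemma dpl_opp f x l : derivable_pt_lim f x l -> derivable_pt_lim (fun t => - f t) x (- l).
Proof. intros H. exact (derivable_pt_lim_opp f x l H). Qed.
Lemma dpl_id x : derivable_pt_lim (fun t => t) x 1.
Proof. exact (derivable_pt_lim_id x). Qed.
Lemma dpl_const c x : derivable_pt_lim (fun _ => c) x 0.
Proof. exact (derivable_pt_lim_const c x). Qed.
Lemma dpl_scal c f x l : derivable_pt_lim f x l -> derivable_pt_lim (fun t => c * f t) x (c * l).
Proof. intros H. replace (c * l) with (0 * f x + c * l) by ring. apply (dpl_mult (fun _ => c) f); auto. apply dpl_const. Qed.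
Lemma dpl_exp c x : derivable_pt_lim (fun t => exp (c * t)) x (c * exp (c * x)).
Proof.
  apply is_derive_Reals. auto_derive; auto. ring.
Qed.
Lemma dpl_leq f x l l' : l = l' -> derivable_pt_lim f x l -> derivable_pt_lim f x l'.
Proof. intros ->; auto. Qed.

Lemma nonincr (g g' : R -> R) s u : s <= u ->
  (forall c, s <= c <= u -> derivable_pt_lim g c (g' c)) -> (forall c, s <= c <= u -> g' c <= 0) -> g u <= g s.
Proof.
  intros Hsu Hd Hn. destruct Hsu as [Hlt|Heq]; [|subst; lra].
  destruct (MVT_cor2 g g' s u Hlt Hd) as [c [Hc1 Hc2]].
  assert (g' c <= 0) by (apply Hn; lra). nra.
Qed.

Lemma nondecr (g g' : R -> R) s u : s <= u ->
  (forall c, s <= c <= u -> derivable_pt_lim g c (g' c)) -> (forall c, s <= c <= u -> 0 <= g' c) -> g s <= g u.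
Proof.
  intros Hsu Hd Hn. destruct Hsu as [Hlt|Heq]; [|subst; lra].
  destruct (MVT_cor2 g g' s u Hlt Hd) as [c [Hc1 Hc2]].
  assert (0 <= g' c) by (apply Hn; lra). nra.
Qed.

Section ODE.
Variables f p : R -> R.
Hypothesis Hf : forall y, 0 < y -> derivable_pt_lim f y (p y / y).
Hypothesis Hp : forall y, 0 < y -> derivable_pt_lim p y ((y + / y) * f y).

Lemma ode_pos_bound (a : R) : 1 <= a -> (forall y, a <= y -> 0 < f y) ->
  exists C, 0 < C /\ forall t, a <= t -> Rabs (p t) <= C * t * f t.
Proof.
  intros Ha Hpos.
  set (E := fun t => p t - 2 * t * f t).
  set (P := fun t => E t * exp (2 * t)).
  set (P' := fun t => (/ t - 3 * t - 2) * f t * exp (2 * t)).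
  assert (HdP : forall t, 0 < t -> derivable_pt_lim P t (P' t)).
  { intros t Ht. unfold P, P', E.
    eapply dpl_leq; [|apply dpl_mult; [apply dpl_minus; [apply Hp; auto|apply dpl_mult; [apply dpl_scal, dpl_id|apply Hf; auto]]|apply dpl_exp]].
    cbv beta. field. lra. }
  assert (HP'n : forall t, a <= t -> P' t <= 0).
  { intros t Ht. unfold P'. specialize (Hpos t Ht). pose proof (exp_pos (2 * t)).
    assert (/ t <= 1) by (rewrite <- Rinv_1; apply Rinv_le_contravar; lra).
    assert (/ t - 3 * t - 2 < 0) by lra.
    assert (0 < f t * exp (2 * t)) by (apply Rmult_lt_0_compat; auto).
    nra. }
  assert (Pdec : forall s u, a <= s -> s <= u -> P u <= P s).
  { intros s u Hs Hsu. apply (nonincr P P'); auto.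
    - intros c Hc. apply HdP. lra.
    - intros c Hc. apply HP'n. lra. }
  set (Fq := fun t => p t + 3 * t * f t).
  set (Q := fun t => Fq t * exp (-3 * t)).
  set (Q' := fun t => (t + / t + 3 - 9 * t) * f t * exp (-3 * t)).
  assert (HdQ : forall t, 0 < t -> derivable_pt_lim Q t (Q' t)).
  { intros t Ht. unfold Q, Q', Fq.
    eapply dpl_leq; [|apply dpl_mult; [apply dpl_plus; [apply Hp; auto|apply dpl_mult; [apply dpl_scal, dpl_id|apply Hf; auto]]|apply dpl_exp]].
    cbv beta. field. lra. }
  assert (HQ'n : forall t, a <= t -> Q' t <= 0).
  { intros t Ht. unfold Q'. specialize (Hpos t Ht). pose proof (exp_pos (-3 * t)).
    assert (/ t <= 1) by (rewrite <- Rinv_1; apply Rinv_le_contravar; lra).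
    assert (t + / t + 3 - 9 * t < 0) by lra.
    assert (0 < f t * exp (-3 * t)) by (apply Rmult_lt_0_compat; auto).
    nra. }
  assert (Qdec : forall s u, a <= s -> s <= u -> Q u <= Q s).
  { intros s u Hs Hsu. apply (nonincr Q Q'); auto.
    - intros c Hc. apply HdQ. lra.
    - intros c Hc. apply HQ'n. lra. }
  assert (Low : forall t, a <= t -> - (3 * t * f t) <= p t).
  { intros t0 Ht0. destruct (Rle_lt_dec 0 (Fq t0)) as [Hq|Hq]; [unfold Fq in Hq; lra|].
    exfalso.
    set (del := - Q t0).
    assert (Hdel : 0 < del).
    { unfold del, Q. pose proof (exp_pos (-3 * t0)). nra. }
    assert (Hps : forall s, t0 <= s -> p s <= - 3 * del * s).
    { intros s Hs. pose proof (Qdec t0 s Ht0 Hs). unfold Q in H.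
      pose proof (exp_pos (-3 * s)). pose proof (exp_pos (3 * s)).
      assert (Ee : exp (-3 * s) * exp (3 * s) = 1) by (rewrite <- exp_plus; replace (-3 * s + 3 * s) with 0 by ring; apply exp_0).
      assert (Fq s <= - del * exp (3 * s)).
      { unfold del, Q. replace (Fq s) with (Fq s * exp (-3 * s) * exp (3 * s)) by (rewrite Rmult_assoc, Ee; ring).
        apply Rmult_le_compat_r; lra. }
      assert (3 * s < exp (3 * s)).
      { pose proof (exp_ineq1 (3 * s)). assert (3 * s <> 0) by lra. specialize (H3 H4). lra. }
      assert (0 < f s) by (apply Hpos; lra).
      unfold Fq in H2. assert (0 < s) by lra. nra. }
    set (t1 := t0 + f t0 / (3 * del) + 1).
    assert (Hft0 : 0 < f t0) by (apply Hpos; lra).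
    assert (Ht01 : t0 < t1) by (unfold t1; assert (0 < f t0 / (3 * del)) by (apply Rdiv_lt_0_compat; lra); lra).
    destruct (MVT_cor2 f (fun y => p y / y) t0 t1 Ht01) as [c [Hc1 Hc2]].
    { intros c Hc. apply Hf. lra. }
    assert (p c / c <= - 3 * del).
    { assert (0 < c) by lra. specialize (Hps c ltac:(lra)).
      apply Rmult_le_reg_r with c; auto. unfold Rdiv. rewrite Rmult_assoc, Rinv_l, Rmult_1_r by lra. lra. }
    assert (f t1 <= f t0 - 3 * del * (t1 - t0)) by nra.
    assert (3 * del * (t1 - t0) = f t0 + 3 * del) by (unfold t1; field; lra).
    assert (0 < f t1) by (apply Hpos; lra). lra. }
  set (K1 := 2 + Rabs (E a) / f a).
  assert (Hfa : 0 < f a) by (apply Hpos; lra).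
  assert (HK1 : 2 <= K1) by (unfold K1; assert (0 <= Rabs (E a) / f a) by (apply Rdiv_le_0_compat; [apply Rabs_pos|lra]); lra).
  assert (Up : forall t, a <= t -> p t <= K1 * t * f t).
  { intros t Ht. assert (Hft : 0 < f t) by (apply Hpos; lra).
    destruct (Rle_lt_dec (E t) 0) as [HE|HE].
    - unfold E in HE. assert (0 <= t * f t) by nra. nra.
    - assert (HPs : forall s, a <= s <= t -> 0 < E s).
      { intros s Hs. pose proof (Pdec s t ltac:(lra) ltac:(lra)). unfold P in H.
        pose proof (exp_pos (2 * t)). pose proof (exp_pos (2 * s)).
        assert (0 < E t * exp (2 * t)) by (apply Rmult_lt_0_compat; auto).
        destruct (Rle_lt_dec (E s) 0); auto. nra. }
      assert (Hfat : f a <= f t).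
      { apply (nondecr f (fun y => p y / y)); auto.
        - intros c Hc. apply Hf. lra.
        - intros c Hc. specialize (HPs c Hc). unfold E in HPs. assert (0 < f c) by (apply Hpos; lra).
          apply Rdiv_le_0_compat; [nra|lra]. }
      assert (HEa : E t <= E a).
      { pose proof (Pdec a t ltac:(lra) Ht). unfold P in H.
        assert (HEa0 : 0 < E a) by (apply HPs; lra).
        pose proof (exp_pos (2 * t)).
        assert (exp (2 * a) <= exp (2 * t)) by (apply exp_le; lra) || (destruct (Req_dec a t); [subst; lra|left; apply exp_increasing; lra]).
        nra. }
      assert (E a <= Rabs (E a) / f a * (t * f t)).
      { assert (0 < E a) by (apply HPs; lra). rewrite Rabs_pos_eq by lra.
        unfold Rdiv. rewrite Rmult_assoc. 
        assert (1 <= / f a * (t * f t)).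
        { apply Rmult_le_reg_l with (f a); auto. rewrite <- Rmult_assoc, Rinv_r, Rmult_1_l, Rmult_1_r by lra. nra. }
        nra. }
      assert (p t = E t + 2 * t * f t) by (unfold E; ring). unfold K1. nra. }
  exists (Rmax K1 3). split; [apply Rlt_le_trans with 3; [lra|apply Rmax_r]|].
  intros t Ht. specialize (Low t Ht). specialize (Up t Ht).
  assert (Hft : 0 < f t) by (apply Hpos; lra).
  assert (0 < t * f t) by (apply Rmult_lt_0_compat; lra).
  pose proof (Rmax_l K1 3). pose proof (Rmax_r K1 3).
  apply Rabs_le. split; nra.
Qed.

End ODE.
Lemma deriv_zero_loc (g : R -> R) y l r : 0 < r -> (forall h, Rabs h < r -> g (y + h) = g y) ->
  derivable_pt_lim g y l -> l = 0.
Proof.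
  intros Hr Hloc Hd. destruct (Req_dec l 0) as [|Hl]; auto. exfalso.
  assert (He : 0 < Rabs l / 2) by (apply Rdiv_lt_0_compat; [apply Rabs_pos_lt; auto|lra]).
  destruct (Hd _ He) as [del Hdel].
  set (h := Rmin del r / 2).
  assert (Hh : 0 < h) by (unfold h; apply Rdiv_lt_0_compat; [apply Rmin_pos; [apply cond_pos|auto]|lra]).
  assert (Hhd : h < del) by (unfold h; pose proof (Rmin_l del r); pose proof (cond_pos del); lra).
  assert (Hhr : h < r) by (unfold h; pose proof (Rmin_r del r); lra).
  specialize (Hdel h ltac:(lra) ltac:(rewrite Rabs_pos_eq; lra)).
  rewrite Hloc in Hdel by (rewrite Rabs_pos_eq; lra).
  replace ((g y - g y) / h - l) with (- l) in Hdel by (field; lra).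
  rewrite Rabs_Ropp in Hdel. pose proof (Rabs_pos l). lra.
Qed.

Lemma dpl_cont f x l : derivable_pt_lim f x l -> continuity_pt f x.
Proof. intros H. apply (derivable_continuous_pt f x (exist _ l H)). Qed.

Lemma ode_tail (f p : R -> R) :
  (forall y, 0 < y -> derivable_pt_lim f y (p y / y)) ->
  (forall y, 0 < y -> derivable_pt_lim p y ((y + / y) * f y)) ->
  exists Y C, 1 <= Y /\ 0 < C /\ forall y, Y <= y -> Rabs (p y) <= C * y * Rabs (f y).
Proof.
  intros Hf Hp.
  destruct (classic (exists a, 1 <= a /\ forall y, a <= y -> f y <> 0)) as [[a [Ha Hnz]] | Hno].
  - destruct (Rlt_dec 0 (f a)) as [Hfa|Hfa].
    + assert (Hpos : forall y, a <= y -> 0 < f y).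
      { intros y Hy. destruct (Rlt_dec 0 (f y)) as [|N]; auto. exfalso.
        assert (f y < 0) by (specialize (Hnz y Hy); lra).
        assert (a < y) by (destruct Hy; auto; subst; lra).
        destruct (IVT_interv (fun t => - f t) a y) as [z [Hz1 Hz2]]; auto; try lra.
        - intros b Hb. apply (continuity_pt_opp f). apply (dpl_cont f b (p b / b)). apply Hf. lra.
        - apply (Hnz z); lra. }
      destruct (ode_pos_bound f p Hf Hp a Ha Hpos) as [C [HC HB]].
      exists a, C. repeat split; auto. intros y Hy. rewrite (Rabs_pos_eq (f y)) by (left; apply Hpos; auto). auto.
    + assert (Hfa' : f a < 0) by (specialize (Hnz a (Rle_refl a)); lra).
      assert (Hneg : forall y, a <= y -> 0 < - f y).
      { intros y Hy. destruct (Rlt_dec (f y) 0) as [|N]; [lra|]. exfalso.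
        assert (0 < f y) by (specialize (Hnz y Hy); lra).
        assert (a < y) by (destruct Hy; auto; subst; lra).
        destruct (IVT_interv f a y) as [z [Hz1 Hz2]]; auto; try lra.
        - intros b Hb. apply (dpl_cont f b (p b / b)). apply Hf. lra.
        - apply (Hnz z); lra. }
      assert (Hf' : forall y, 0 < y -> derivable_pt_lim (fun t => - f t) y ((fun t => - p t) y / y)).
      { intros y Hy. eapply dpl_leq; [|apply dpl_opp, Hf; auto]. cbv beta. field. lra. }
      assert (Hp' : forall y, 0 < y -> derivable_pt_lim (fun t => - p t) y ((y + / y) * (fun t => - f t) y)).
      { intros y Hy. eapply dpl_leq; [|apply dpl_opp, Hp; auto]. cbv beta. ring. }
      destruct (ode_pos_bound (fun t => - f t) (fun t => - p t) Hf' Hp' a Ha Hneg) as [C [HC HB]].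
      exists a, C. repeat split; auto. intros y Hy. specialize (HB y Hy). cbv beta in HB.
      rewrite Rabs_Ropp in HB. rewrite (Rabs_left (f y)) by (specialize (Hneg y Hy); lra). auto.
  - assert (Hz : forall a, 1 <= a -> exists y, a <= y /\ f y = 0).
    { intros a Ha. apply NNPP. intros N. apply Hno. exists a. split; auto.
      intros y Hy Hfy. apply N. exists y; auto. }
    destruct (Hz 1 (Rle_refl 1)) as [y1 [Hy1 Hfy1]].
    set (g := fun t => f t * p t).
    set (g' := fun t => p t / t * p t + f t * ((t + / t) * f t)).
    assert (Hg : forall t, 0 < t -> derivable_pt_lim g t (g' t)).
    { intros t Ht. apply dpl_mult; auto. }
    assert (Hg'0 : forall t, 0 < t -> 0 <= g' t).
    { intros t Ht. unfold g'. assert (0 < / t) by (apply Rinv_0_lt_compat; auto).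
      assert (0 <= p t / t * p t) by (unfold Rdiv; rewrite Rmult_comm, <- Rmult_assoc; apply Rmult_le_pos; [nra|lra]).
      assert (0 <= f t * ((t + / t) * f t)) by (rewrite Rmult_comm, Rmult_assoc; apply Rmult_le_pos; nra).
      lra. }
    assert (Zf : forall y, y1 < y -> f y = 0).
    { intros y Hy. destruct (Hz (y + 1) ltac:(lra)) as [y2 [Hy2 Hfy2]].
      assert (Hg0 : forall s, y1 <= s <= y2 -> g s = 0).
      { intros s Hs.
        assert (g y1 <= g s).
        { apply (nondecr g g'); try lra. intros c Hc; apply Hg; lra. intros c Hc; apply Hg'0; lra. }
        assert (g s <= g y2).
        { apply (nondecr g g'); try lra. intros c Hc; apply Hg; lra. intros c Hc; apply Hg'0; lra. }
        unfold g in *. rewrite Hfy1 in H. rewrite Hfy2 in H0. lra. }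
      assert (Hgy : g' y = 0).
      { apply (deriv_zero_loc g y (g' y) (Rmin (y - y1) (y2 - y))).
        - apply Rmin_pos; lra.
        - intros h Hh. pose proof (Rmin_l (y - y1) (y2 - y)). pose proof (Rmin_r (y - y1) (y2 - y)).
          apply Rabs_def2 in Hh. rewrite !Hg0; lra.
        - apply Hg; lra. }
      unfold g' in Hgy. assert (0 < y) by lra. assert (0 < / y) by (apply Rinv_0_lt_compat; auto).
      assert (0 <= p y / y * p y) by (unfold Rdiv; rewrite Rmult_comm, <- Rmult_assoc; apply Rmult_le_pos; [nra|lra]).
      assert (f y * ((y + / y) * f y) = 0) by (assert (0 <= f y * ((y + / y) * f y)) by (rewrite Rmult_comm, Rmult_assoc; apply Rmult_le_pos; nra); lra).
      destruct (Req_dec (f y) 0) as [|N]; auto. exfalso.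
      assert (0 < f y * f y) by (apply Rsqr_pos_lt in N; unfold Rsqr in N; lra).
      nra. }
    exists (y1 + 1), 1. repeat split; try lra.
    intros y Hy.
    assert (Hpy : p y / y = 0).
    { apply (deriv_zero_loc f y (p y / y) (y - y1)); try lra.
      - intros h Hh. apply Rabs_def2 in Hh. rewrite !Zf; lra.
      - apply Hf; lra. }
    assert (p y = 0).
    { apply Rmult_eq_reg_r with (/ y). rewrite Rmult_0_l. exact Hpy. apply Rinv_neq_0_compat. lra. }
    rewrite H, Rabs_R0. pose proof (Rabs_pos (f y)). nra.
Qed.
Lemma iy_neq0 y : 0 < y -> (0, y) <> RtoC 0.
Proof. intros Hy E. injection E. lra. Qed.

Lemma Ci_neq0 : Ci <> RtoC 0.
Proof. intros E. injection E. lra. Qed.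
Lemma C1_neq0 : RtoC 1 <> RtoC 0.
Proof. intros E. injection E. lra. Qed.

Lemma small_seq del : 0 < del -> exists N, forall n, (N <= n)%nat -> / (INR n + 1) < del.
Proof.
  intros Hd. destruct (archimed_cor1 del Hd) as [N [HN HN0]]. exists N. intros n Hn.
  assert (0 < INR N) by (apply lt_0_INR; lia).
  assert (INR N <= INR n) by (apply le_INR; lia).
  eapply Rle_lt_trans; [|apply HN]. apply Rinv_le_contravar; lra.
Qed.

Lemma C_derive_hankel y : 0 < y -> C_derive hankel1 (0, y) = Hp (0, y).
Proof.
  intros Hy.
  pose proof (DD_hankel (fun t => 0 < t) (0, y) (RtoC 1) C1_neq0 (iy_neq0 y Hy) (DD_log_h y Hy)) as HD.
  set (L := Hp (0, y)) in *.
  assert (Hlim : forall (comp : C -> R), (forall u, Rabs (comp u) <= Cmod u) -> (forall a b, comp (a - b)%C = comp a - comp b) ->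
     is_lim_seq (fun n => comp ((hankel1 (Rbar_loc_seq 0 n, y) - hankel1 (0, y)) / ((Rbar_loc_seq 0 n, y) - (0, y)))%C) (comp L)).
  { intros comp Hc Hcm. apply is_lim_seq_Reals. intros eps Heps.
    destruct (HD eps Heps) as [del [Hdel H]].
    destruct (small_seq del Hdel) as [N HN]. exists N. intros n Hn. unfold R_dist.
    simpl Rbar_loc_seq. rewrite Rplus_0_l.
    set (t := / (INR n + 1)).
    assert (Ht : 0 < t) by (unfold t; apply Rinv_0_lt_compat; pose proof (pos_INR n); lra).
    specialize (H t Ht ltac:(lra) ltac:(rewrite Rabs_pos_eq; [apply HN; lia|lra])).
    assert (E1 : ((0, y) + RtoC t * RtoC 1)%C = (t, y)) by (unfold Cplus, Cmult, RtoC; simpl; f_equal; ring).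
    assert (E2 : ((t, y) - (0, y))%C = (RtoC t * RtoC 1)%C) by (unfold Cminus, Cplus, Copp, Cmult, RtoC; simpl; f_equal; ring).
    rewrite E1 in H. rewrite E2. rewrite <- Hcm. eapply Rle_lt_trans; [apply Hc|exact H]. }
  unfold C_derive, C_lim. cbn [fst snd].
  unfold Lim. cbv beta.
  rewrite (is_lim_seq_unique _ _ (Hlim fst (fun u => re_le_Cmod u) (fun a b => eq_refl))).
  rewrite (is_lim_seq_unique _ _ (Hlim snd (fun u => Im_le_Cmod u) (fun a b => eq_refl))).
  clearbody L. destruct L as [l1 l2]. reflexivity.
Qed.

Lemma fst_div_real (X : C) (h : R) : h <> 0 -> fst (X / RtoC h)%C = fst X / h.
Proof. intros Hh. destruct X as [a b]. unfold Cdiv, Cinv, Cmult, RtoC; simpl. field. auto. Qed.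
Lemma snd_div_real (X : C) (h : R) : h <> 0 -> snd (X / RtoC h)%C = snd X / h.
Proof. intros Hh. destruct X as [a b]. unfold Cdiv, Cinv, Cmult, RtoC; simpl. field. auto. Qed.

Lemma DD_v_real (G : C -> C) (y : R) (L : C) : DD (fun _ => True) G (0, y) Ci L ->
  derivable_pt_lim (fun s => fst (G (0, s))) y (fst (Ci * L)%C) /\
  derivable_pt_lim (fun s => snd (G (0, s))) y (snd (Ci * L)%C).
Proof.
  intros HD.
  assert (Key : forall (comp : C -> R), (forall u, Rabs (comp u) <= Cmod u) ->
     (forall a b, comp (a - b)%C = comp a - comp b) ->
     (forall X h, h <> 0 -> comp (X / RtoC h)%C = comp X / h) ->
     derivable_pt_lim (fun s => comp (G (0, s))) y (comp (Ci * L)%C)).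
  { intros comp Hc Hcm Hcd eps Heps. destruct (HD eps Heps) as [del [Hdel H]].
    exists (mkposreal del Hdel). intros h Hh Hhd. simpl in Hhd.
    specialize (H h I Hh Hhd).
    assert (E1 : ((0, y) + RtoC h * Ci)%C = (0, Rplus y h)) by (unfold Cplus, Cmult, RtoC, Ci; simpl; f_equal; ring).
    rewrite E1 in H.
    replace ((comp (G (0, Rplus y h)) - comp (G (0, y))) / h - comp (Ci * L)%C)
      with (comp (Ci * ((G (0, Rplus y h) - G (0, y)) / (RtoC h * Ci) - L))%C).
    - eapply Rle_lt_trans; [apply Hc|]. rewrite Cmod_mult, Cmod_Ci, Rmult_1_l. exact H.
    - replace (Ci * ((G (0, Rplus y h) - G (0, y)) / (RtoC h * Ci) - L))%C
        with ((G (0, Rplus y h) - G (0, y)) / RtoC h - Ci * L)%C.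
      + rewrite Hcm, Hcd, Hcm by auto. reflexivity.
      + field. split; [apply Ci_neq0|]. intros E; injection E; auto. }
  split; apply Key; auto.
  - apply re_le_Cmod.
  - apply fst_div_real.
  - apply Im_le_Cmod.
  - apply snd_div_real.
Qed.

Lemma ode_components (y h1 h2 a1 a2 b1 b2 : R) :
  ((0, y) * (0, y) * (b1, b2) + (0, y) * (a1, a2) + ((0, y) * (0, y) - RtoC 1) * (h1, h2))%C = RtoC 0 ->
  - (y * y) * b1 - y * a2 - (y * y + 1) * h1 = 0 /\ - (y * y) * b2 + y * a1 - (y * y + 1) * h2 = 0.
Proof.
  intros H. unfold Cmult, Cplus, Cminus, Copp, RtoC in H. simpl in H. injection H. intros E2 E1. split; nra.
Qed.

Lemma fst_Ci (X : C) : fst (Ci * X)%C = - snd X.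
Proof. destruct X; unfold Ci, Cmult; simpl; ring. Qed.
Lemma snd_Ci (X : C) : snd (Ci * X)%C = fst X.
Proof. destruct X; unfold Ci, Cmult; simpl; ring. Qed.

Lemma hfun_bound : exists Y C, 1 <= Y /\ 0 < C /\ forall y, Y <= y -> Cmod (hfun (0, y)) <= C * y.
Proof.
  set (fR := fun s => fst (hankel1 (0, s))). set (fI := fun s => snd (hankel1 (0, s))).
  set (pR := fun s => - (s * snd (Hp (0, s)))). set (pI := fun s => s * fst (Hp (0, s))).
  assert (DH : forall y, 0 < y -> DD (fun _ => True) hankel1 (0, y) Ci (Hp (0, y))).
  { intros y Hy. apply DD_hankel; auto using Ci_neq0, iy_neq0. apply DD_log_v; auto. }
  assert (DHp : forall y, 0 < y -> DD (fun _ => True) Hp (0, y) Ci (Hpp (0, y))).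
  { intros y Hy. apply DD_Hp; auto using Ci_neq0, iy_neq0. apply DD_log_v; auto. }
  assert (ODE : forall y, 0 < y ->
     - (y * y) * fst (Hpp (0, y)) - y * snd (Hp (0, y)) - (y * y + 1) * fst (hankel1 (0, y)) = 0 /\
     - (y * y) * snd (Hpp (0, y)) + y * fst (Hp (0, y)) - (y * y + 1) * snd (hankel1 (0, y)) = 0).
  { intros y Hy. pose proof (bessel_ode (0, y) (iy_neq0 y Hy)) as E.
    destruct (Hpp (0, y)) as [b1 b2]. destruct (Hp (0, y)) as [a1 a2]. destruct (hankel1 (0, y)) as [h1 h2].
    apply ode_components in E. simpl. exact E. }
  assert (HfR : forall y, 0 < y -> derivable_pt_lim fR y (pR y / y)).
  { intros y Hy. unfold pR. eapply dpl_leq; [|apply (DD_v_real hankel1 y _ (DH y Hy))].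
    rewrite fst_Ci. field. lra. }
  assert (HfI : forall y, 0 < y -> derivable_pt_lim fI y (pI y / y)).
  { intros y Hy. unfold pI. eapply dpl_leq; [|apply (DD_v_real hankel1 y _ (DH y Hy))].
    rewrite snd_Ci. field. lra. }
  assert (HpR : forall y, 0 < y -> derivable_pt_lim pR y ((y + / y) * fR y)).
  { intros y Hy. destruct (DD_v_real Hp y _ (DHp y Hy)) as [D1 D2].
    unfold pR. eapply dpl_leq; [|apply dpl_opp, dpl_mult; [apply dpl_id|apply D2]].
    rewrite snd_Ci. destruct (ODE y Hy) as [O1 O2]. unfold fR.
    apply Rmult_eq_reg_r with y; [|lra]. field_simplify; [|lra]. nra. }
  assert (HpI : forall y, 0 < y -> derivable_pt_lim pI y ((y + / y) * fI y)).
  { intros y Hy. destruct (DD_v_real Hp y _ (DHp y Hy)) as [D1 D2].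
    unfold pI. eapply dpl_leq; [|apply dpl_mult; [apply dpl_id|apply D1]].
    rewrite fst_Ci. destruct (ODE y Hy) as [O1 O2]. unfold fI.
    apply Rmult_eq_reg_r with y; [|lra]. field_simplify; [|lra]. nra. }
  destruct (ode_tail fR pR HfR HpR) as [Y1 [C1 [HY1 [HC1 B1]]]].
  destruct (ode_tail fI pI HfI HpI) as [Y2 [C2 [HY2 [HC2 B2]]]].
  exists (Rmax Y1 Y2), (C1 + C2). split; [eapply Rle_trans; [apply HY1|apply Rmax_l]|]. split; [lra|].
  intros y Hy.
  assert (Hy1 : Y1 <= y) by (eapply Rle_trans; [apply Rmax_l|apply Hy]).
  assert (Hy2 : Y2 <= y) by (eapply Rle_trans; [apply Rmax_r|apply Hy]).
  assert (Hy0 : 0 < y) by lra.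
  specialize (B1 y Hy1). specialize (B2 y Hy2).
  unfold hfun. rewrite C_derive_hankel by auto.
  unfold fR, pR, fI, pI in *.
  destruct (Hp (0, y)) as [a1 a2]. destruct (hankel1 (0, y)) as [h1 h2].
  simpl in B1, B2.
  destruct (Ceq_dec (h1, h2) (RtoC 0)) as [E|E].
  - rewrite E. unfold Cdiv. rewrite Cinv_0, Cmult_0_r, Cmod_0. nra.
  - rewrite Cmod_div by auto.
    assert (Hm : 0 < Cmod (h1, h2)) by (apply Cmod_gt_0; auto).
    apply Rmult_le_reg_r with (Cmod (h1, h2)); auto. unfold Rdiv. rewrite Rmult_assoc, Rinv_l, Rmult_1_r by lra.
    eapply Rle_trans; [apply Cmod_le_ReIm|].
    pose proof (Re_le_Cmod (h1, h2)). pose proof (Im_le_Cmod (h1, h2)).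
    unfold Re, Im in *. unfold Cmult; simpl fst in *; simpl snd in *.
    replace (0 * a1 - y * a2) with (- (y * a2)) by ring.
    replace (0 * a2 + y * a1) with (y * a1) by ring.
    assert (0 <= C1 * y) by nra. assert (0 <= C2 * y) by nra.
    nra.
Qed.
Lemma nat_above (x : R) : exists N : nat, x < INR N.
Proof.
  destruct (Rlt_dec 0 x) as [Hx|Hx].
  - destruct (archimed_cor1 (/ x)) as [N [HN HN0]]; [apply Rinv_0_lt_compat; auto|].
    exists N. assert (0 < INR N) by (apply lt_0_INR; lia).
    apply Rinv_lt_cancel; auto. 
  - exists 1%nat. simpl. lra.
Qed.

Lemma sum_term_le (f : nat -> R) N j : (forall i, 0 <= f i) -> (j <= N)%nat -> f j <= sum_f_R0 f N.
Proof.
  intros Hf. induction N; intros Hj.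
  - assert (j = 0%nat) by lia. subst. simpl. lra.
  - simpl. destruct (Nat.eq_dec j (S N)) as [E|E].
    + subst. pose proof (cond_pos_sum f N Hf). lra.
    + specialize (IHN ltac:(lia)). specialize (Hf (S N)). lra.
Qed.

Lemma hfun_lin (Z Rad k : R) : 0 < Z -> 0 < Rad -> 0 < k ->
  exists K, 0 < K /\ forall m, (1 <= m)%nat -> Cmod (hfun (Cmult (kmode k Z m) (RtoC Rad))) <= K * INR m.
Proof.
  intros hZ hR hk.
  destruct hfun_bound as [Y [C [HY [HC HB]]]].
  pose proof PI_RGT_0 as Hpi.
  destruct (nat_above (Z / PI * (k + Y / Rad))) as [M0 HM0].
  set (g := fun j => Cmod (hfun (Cmult (kmode k Z j) (RtoC Rad)))).
  set (B := sum_f_R0 g M0).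
  assert (Hg0 : forall i, 0 <= g i) by (intros; apply Cmod_ge_0).
  assert (HB0 : 0 <= B) by (apply cond_pos_sum; auto).
  exists (B + C * Rad * PI / Z + 1). split.
  { assert (0 < C * Rad * PI / Z) by (apply Rdiv_lt_0_compat; [|lra]; apply Rmult_lt_0_compat; [apply Rmult_lt_0_compat|]; lra). lra. }
  intros m Hm.
  assert (Hm1 : 1 <= INR m) by (apply (le_INR 1); auto).
  assert (HCR : 0 < C * Rad * PI / Z) by (apply Rdiv_lt_0_compat; [|lra]; apply Rmult_lt_0_compat; [apply Rmult_lt_0_compat|]; lra).
  destruct (Nat.le_gt_cases m M0) as [Hle|Hlt].
  - assert (g m <= B) by (apply sum_term_le; auto). fold (g m). nra.
  - set (a := INR m * PI / Z).
    assert (HaM : INR M0 * PI / Z <= a).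
    { unfold a. apply Rmult_le_compat_r; [left; apply Rinv_0_lt_compat; auto|].
      apply Rmult_le_compat_r; [lra|]. apply le_INR; lia. }
    assert (Hak : k + Y / Rad < a).
    { eapply Rlt_le_trans; [|apply HaM].
      apply Rmult_lt_reg_r with (Z / PI); [apply Rdiv_lt_0_compat; auto|].
      replace (INR M0 * PI / Z * (Z / PI)) with (INR M0) by (field; split; lra).
      rewrite Rmult_comm. auto. }
    assert (HYR : 0 < Y / Rad) by (apply Rdiv_lt_0_compat; lra).
    assert (Ea : INR m ^ 2 * PI ^ 2 / Z ^ 2 - k ^ 2 = a * a - k * k) by (unfold a; field; lra).
    set (s := sqrt (INR m ^ 2 * PI ^ 2 / Z ^ 2 - k ^ 2)).
    assert (Hkm : kmode k Z m = Cmult Ci (RtoC s)).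
    { unfold kmode. destruct (Rlt_dec (INR m * PI / Z) k) as [N|_]; [exfalso; fold a in N; lra|]. reflexivity. }
    assert (Hz : Cmult (kmode k Z m) (RtoC Rad) = (0, s * Rad)).
    { rewrite Hkm. unfold Cmult, Ci, RtoC; simpl. f_equal; ring. }
    assert (Hs1 : a - k <= s).
    { unfold s. rewrite Ea. rewrite <- (sqrt_square (a - k)) by lra. apply sqrt_le_1_alt. nra. }
    assert (Hs2 : s <= a).
    { unfold s. rewrite Ea. apply Rle_trans with (sqrt (a * a)); [apply sqrt_le_1_alt; nra|rewrite sqrt_square; lra]. }
    assert (HyY : Y <= s * Rad).
    { assert (Y / Rad <= s) by lra. apply Rmult_le_compat_r with (r := Rad) in H; [|lra].
      unfold Rdiv in H. rewrite Rmult_assoc, Rinv_l, Rmult_1_r in H; lra. }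
    specialize (HB (s * Rad) HyY). rewrite Hz.
    assert (C * (s * Rad) <= C * Rad * PI / Z * INR m).
    { replace (C * Rad * PI / Z * INR m) with (C * Rad * a) by (unfold a; field; lra).
      assert (0 < C * Rad) by nra. nra. }
    assert (0 <= B * INR m) by nra.
    nra.
Qed.

Theorem lemma3p3 (Z Rad k : R) (hZ : 0 < Z) (hR : 0 < Rad) (hk : 0 < k)
  (hres : forall m : nat, (1 <= m)%nat -> k <> INR m * PI / Z) :
  exists Cst : R, 0 < Cst /\
    forall v : nat -> C, in_H12 v ->
      in_Hm12 (Top k Rad Z v) /\ Hm12_norm (Top k Rad Z v) <= Cst * H12_norm v.
Proof.
  destruct (hfun_lin Z Rad k hZ hR hk) as [K [HK HB]].
  exists K. split; auto. intros v Hv.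
  assert (Hterm : forall n, 0 <= Hm12_terms (Top k Rad Z v) n <= K ^ 2 * H12_terms v n).
  { intros n. unfold Hm12_terms, H12_terms, Top.
    assert (HSn : 0 < INR (S n)) by (apply lt_0_INR; lia).
    specialize (HB (S n) ltac:(lia)).
    rewrite Cmod_mult.
    set (h := Cmod (hfun (Cmult (kmode k Z (S n)) (RtoC Rad)))) in *.
    set (c := Cmod (v (S n))).
    assert (0 <= h) by apply Cmod_ge_0. assert (0 <= c) by apply Cmod_ge_0.
    split.
    - apply Rdiv_le_0_compat; auto. apply pow_le. nra.
    - apply Rmult_le_reg_r with (INR (S n)); auto.
      unfold Rdiv. rewrite Rmult_assoc, Rinv_l, Rmult_1_r by lra.
      assert (h * h <= (K * INR (S n)) * (K * INR (S n))) by (apply Rmult_le_compat; auto).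
      assert (0 <= c * c) by nra.
      assert (h * h * (c * c) <= (K * INR (S n)) * (K * INR (S n)) * (c * c)) by (apply Rmult_le_compat_r; auto).
      nra. }
  assert (Hex : ex_series (fun n => K ^ 2 * H12_terms v n)) by (apply exR_scal; exact Hv).
  assert (Hm : in_Hm12 (Top k Rad Z v)).
  { unfold in_Hm12. apply ex_series_le_R with (fun n => K ^ 2 * H12_terms v n); auto.
    intros n. rewrite Rabs_pos_eq; apply Hterm. }
  split; auto.
  unfold Hm12_norm, H12_norm.
  assert (HS0 : 0 <= Series (H12_terms v)).
  { pose proof (Series_le (fun _ => 0) (H12_terms v)). rewrite Series_0' in H. apply H; auto.
    intros n. split; [lra|]. unfold H12_terms. apply Rmult_le_pos; [apply pos_INR|apply pow2_ge_0]. }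
  assert (Series (Hm12_terms (Top k Rad Z v)) <= K ^ 2 * Series (H12_terms v)).
  { rewrite <- Series_scal_l. apply Series_le; auto. }
  eapply Rle_trans; [apply sqrt_le_1_alt; exact H|].
  rewrite sqrt_mult_alt by (apply pow2_ge_0).
  rewrite sqrt_pow2 by lra. lra.
Qed.
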